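(* Assume $\Phi$ and $x$ satisfy (P1)–(P4) and (P6) as in the context, let $\delta>0$, $\bar{\mathcal{K}}=\mathcal{K}_{d/2}\setminus X^{-1}(\mathcal{C}_{x,\delta/2})$, and let $r\in(0,d/2]$ and $R_{-1}<\infty$ be such that for every $(t,z_0)\in\bar{\mathcal{K}}$ one has $\bar{\mathcal{B}}_r(z_0)\subset K_d$ and $\sup_{z\in\mathcal{B}_r(z_0)}|J(t,z)^{-1}|\le R_{-1}$. Then there exist $R_3<\infty$, $w_a>0$ and, for each $(t,z_0)\in\bar{\mathcal{K}}$, a matrix $A(t,z_0)\in\mathbb{C}^{n\times n}$ whose imaginary part is symmetric and satisfies $\Im A(t,z_0)\ge w_aI$ (in the sense of quadratic forms), such that for all $(t,z_0)\in\bar{\mathcal{K}}$ and $z\in\mathcal{B}_{r/2}(z_0)$, with $y_0=x(t,z_0)$, $$\Big|\Phi(t,y_0-x(t,z),z)-\Big(\Phi(t,0,z_0)+\tfrac12(z-z_0)^TA(t,z_0)(z-z_0)\Big)\Big|\le R_3|z-z_0|^3.$$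
   Context: Fix $n\ge1$, $T>0$, compact $K_0\subset\mathbb{R}^n$, $d>0$, $\eta\in(0,\infty]$; $K_{d''}=\{z:\operatorname{dist}(z,K_0)\le d''\}$, $\mathcal{K}_{d''}=[0,T]\times K_{d''}$; $J(t,z)=D_zx(t,z)$. Hypotheses: (P1) $x\in C^\infty([0,T]\times\mathbb{R}^n;\mathbb{R}^n)$. (P2) $\Phi\in C^\infty([0,T]\times\mathbb{R}^n\times\mathbb{R}^n;\mathbb{C})$. (P3) $\nabla_y\Phi(t,0,z)$ is real and there is $C>0$ with $|\nabla_y\Phi(t,0,z)-\nabla_y\Phi(t,0,z')|+|x(t,z)-x(t,z')|\ge C|z-z'|$ for $t\in[0,T]$, $z,z'\in K_d$. (P4) There is $w_4>0$ with $\Im\Phi(t,y,z)\ge w_4|y|^2$ for $t\in[0,T]$, $z\in K_d$, $|y|\le2\eta$ (all $y$ if $\eta=\infty$). (P6) $\Phi(t,0,z)$ and $\nabla_y\Phi(t,0,z)$ are real and $J(t,z)^T\nabla_y\Phi(t,0,z)=\nabla_z[\Phi(t,0,z)]$ for all $t\in[0,T]$, $z\in\mathbb{R}^n$. Caustic set $\mathcal{C}_x=\{(t,y)\in[0,T]\times\mathbb{R}^n:\exists z\in K_d\text{ with }y=x(t,z),\ \det J(t,z)=0\}$, $\mathcal{C}_{x,\delta}=\{(t,y):\operatorname{dist}((t,y),\mathcal{C}_x)<\delta\}$; $X(t,z)=(t,x(t,z))$ and $X^{-1}(\mathcal{C}_{x,\delta'})=\{(t,z)\in\mathcal{K}_d:(t,x(t,z))\in\mathcal{C}_{x,\delta'}\}$.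 $\mathcal{B}_r(z)$ is the open ball of radius $r$ about $z$. *)

(* Defs.v *)
From mathcomp Require Import ssreflect ssrfun ssrbool eqtype ssrnat seq fintype bigop.
From mathcomp Require Import fingroup perm.
From Stdlib Require Import Reals.
Open Scope R_scope.

Definition vec (n : nat) := 'I_n -> R.
Definition mat (n : nat) := 'I_n -> 'I_n -> R.

Definition vzero {n} : vec n := fun _ => 0.
Definition vadd {n} (u v : vec n) : vec n := fun i => u i + v i.
Definition vsub {n} (u v : vec n) : vec n := fun i => u i - v i.
Definition vscale {n} (a : R) (v : vec n) : vec n := fun i => a * v i.
Definition basis {n} (j : 'I_n) : vec n := fun i => if i == j then 1 else 0.
Definition dot {n} (u v : vec n) : R := \big[Rplus/0]_(i < n) (u i * v i).
Definition vnorm {n} (v : vec n) : R := sqrt (dot v v).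
(* Euclidean norm of a complex vector given by its real and imaginary parts *)
Definition cvnorm {n} (a b : vec n) : R := sqrt (dot a a + dot b b).
(* modulus of the complex number a + i b *)
Definition cabs (a b : R) : R := sqrt (a ^ 2 + b ^ 2).

Definition mulmv {n} (M : mat n) (v : vec n) : vec n :=
  fun i => \big[Rplus/0]_(j < n) (M i j * v j).
Definition qform {n} (M : mat n) (v : vec n) : R := dot v (mulmv M v).
Definition mmul {n} (M N : mat n) : mat n :=
  fun i k => \big[Rplus/0]_(j < n) (M i j * N j k).
Definition idmat {n} : mat n := fun i j => if i == j then 1 else 0.
Definition mat_symmetric {n} (M : mat n) : Prop := forall i j, M i j = M j i.
Definition det {n} (M : mat n) : R :=
  \big[Rplus/0]_(s : {perm 'I_n})
     ((-1) ^ (nat_of_bool (odd_perm s)) * \big[Rmult/1]_(i < n) M i (s i)).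
Definition inv_norm_le {n} (M : mat n) (Rb : R) : Prop :=
  exists Minv : mat n, mmul Minv M = idmat /\ mmul M Minv = idmat /\
    forall v : vec n, vnorm (mulmv Minv v) <= Rb * vnorm v.

(* packing of (t, z) in R^(1+N) and of (y, z) in R^(n+n) *)
Definition vcons {N} (t : R) (z : vec N) : vec N.+1 :=
  fun i => match unlift ord0 i with Some j => z j | None => t end.
Definition vfst {n} (w : vec (n + n)) : vec n := fun j => w (lshift n j).
Definition vsnd {n} (w : vec (n + n)) : vec n := fun j => w (rshift n j).

Definition continuous_vec {N} (F : vec N -> R) : Prop :=
  forall z eps, 0 < eps -> exists del, 0 < del /\
    forall w, vnorm (vsub w z) < del -> Rabs (F w - F z) < eps.
Fixpoint Ck (k : nat) {N} (F : vec N -> R) : Prop :=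
  match k with
  | O => continuous_vec F
  | S k' => continuous_vec F /\
      forall j : 'I_N, exists G : vec N -> R,
        (forall z, derivable_pt_lim (fun h => F (vadd z (vscale h (basis j)))) 0 (G z))
        /\ Ck k' G
  end.
Definition smooth {N} (F : vec N -> R) : Prop := forall k, Ck k F.
(* C^infinity on [0,T] x R^N : restriction of a smooth function on R^(1+N) *)
Definition smooth_strip (T : R) {N} (F : R -> vec N -> R) : Prop :=
  exists G : vec N.+1 -> R, smooth G /\
    forall t z, 0 <= t <= T -> G (vcons t z) = F t z.

Definition seq_compact {n} (K : vec n -> Prop) : Prop :=
  forall s : nat -> vec n, (forall k, K (s k)) ->
    exists (phi : nat -> nat) (l : vec n),
      (forall k, (phi k < phi (S k))%nat) /\ K l /\
      forall eps, 0 < eps -> exists M, forall k, (M <= k)%nat ->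
        vnorm (vsub (s (phi k)) l) < eps.

(* K_{d''} = { z : dist(z, K0) <= d'' }, dist being the infimum *)
Definition inK {n} (K0 : vec n -> Prop) (d'' : R) (z : vec n) : Prop :=
  forall eps, 0 < eps -> exists k, K0 k /\ vnorm (vsub z k) < d'' + eps.

(* |y| <= 2 eta, with eta = None meaning eta = infinity *)
Definition within_eta {n} (eta : option R) (y : vec n) : Prop :=
  match eta with None => True | Some e => vnorm y <= 2 * e end.

Definition in_Cx {n} (T : R) (K0 : vec n -> Prop) (d : R)
  (x : R -> vec n -> vec n) (J : R -> vec n -> mat n) (t : R) (y : vec n) : Prop :=
  0 <= t <= T /\ exists z, inK K0 d z /\ y = x t z /\ det (J t z) = 0.
Definition in_Cxd {n} (T : R) (K0 : vec n -> Prop) (d : R)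
  (x : R -> vec n -> vec n) (J : R -> vec n -> mat n) (del : R)
  (t : R) (y : vec n) : Prop :=
  exists t' y', in_Cx T K0 d x J t' y' /\
    sqrt ((t - t') ^ 2 + dot (vsub y y') (vsub y y')) < del.
(* Kbar = calK_{d/2} \ X^{-1}(C_{x,delta/2}) *)
Definition in_Kbar {n} (T : R) (K0 : vec n -> Prop) (d : R)
  (x : R -> vec n -> vec n) (J : R -> vec n -> mat n) (delta : R)
  (t : R) (z0 : vec n) : Prop :=
  (0 <= t <= T /\ inK K0 (d / 2) z0) /\
  ~ ((0 <= t <= T /\ inK K0 d z0) /\ in_Cxd T K0 d x J (delta / 2) t (x t z0)).

(* Main.v *)
Require Import Defs.
From HB Require Import structures.
From mathcomp Require Import ssreflect ssrfun ssrbool eqtype ssrnat seq fintype bigop.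
From Stdlib Require Import Reals Lra Lia Psatz.
From Stdlib Require Import FunctionalExtensionality ClassicalEpsilon Classical.
Open Scope R_scope.
Set Warnings "-notation-overridden,-redundant-canonical-projection,-ambiguous-paths".

Lemma RplusA' : associative Rplus. Proof. by move=> *; rewrite Rplus_assoc. Qed.
Lemma RmultA' : associative Rmult. Proof. by move=> *; rewrite Rmult_assoc. Qed.
HB.instance Definition _ := Monoid.isComLaw.Build R 0 Rplus RplusA' Rplus_comm Rplus_0_l.
HB.instance Definition _ := Monoid.isComLaw.Build R 1 Rmult RmultA' Rmult_comm Rmult_1_l.
HB.instance Definition _ := Monoid.isMulLaw.Build R 0 Rmult Rmult_0_l Rmult_0_r.
HB.instance Definition _ := Monoid.isAddLaw.Build R Rmult Rplus Rmult_plus_distr_r Rmult_plus_distr_l.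

Definition nrm1 {n} (v : vec n) : R := \big[Rplus/0]_(i < n) Rabs (v i).
Definition lin {n} (D v : vec n) : R := \big[Rplus/0]_(i < n) (D i * v i).
Definition bil {n} (H : mat n) (a b : vec n) : R :=
  \big[Rplus/0]_(j < n) (\big[Rplus/0]_(k < n) (H j k * b k) * a j).

Lemma sum_le {I : Type} (r : seq I) (F G : I -> R) :
  (forall i, F i <= G i) -> \big[Rplus/0]_(i <- r) F i <= \big[Rplus/0]_(i <- r) G i.
Proof. move=> H; apply: (big_ind2 (fun a b => a <= b)) => //; [lra| move=>*; lra]. Qed.

Lemma abs_sum {I : Type} (r : seq I) (F : I -> R) :
  Rabs (\big[Rplus/0]_(i <- r) F i) <= \big[Rplus/0]_(i <- r) Rabs (F i).
Proof.
apply: (big_ind2 (fun a b => Rabs a <= b)).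
- by rewrite Rabs_R0; lra.
- move=> a b c d H1 H2; apply: Rle_trans (Rabs_triang _ _) _; lra.
- move=> i _; lra.
Qed.

Lemma sum_ge0 {I : Type} (r : seq I) (P : pred I) (F : I -> R) :
  (forall i, 0 <= F i) -> 0 <= \big[Rplus/0]_(i <- r | P i) F i.
Proof. move=> H; apply: (big_ind (fun a => 0 <= a)) => //; [lra| move=>*; lra]. Qed.

Lemma sum_const n c : \big[Rplus/0]_(i < n) c = INR n * c.
Proof.
elim: n => [|n IH]; first by rewrite big_ord0 /=; ring.
rewrite big_ord_recr IH S_INR /=. rewrite Rmult_plus_distr_r Rmult_1_l. reflexivity.
Qed.

Lemma sum_scal {I : Type} (r : seq I) (F : I -> R) c :
  \big[Rplus/0]_(i <- r) (c * F i) = c * \big[Rplus/0]_(i <- r) F i.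
Proof. by rewrite big_distrr. Qed.

Lemma nrm1_ge0 n (v : vec n) : 0 <= nrm1 v.
Proof. apply: sum_ge0 => i; exact: Rabs_pos. Qed.

Lemma coord_le_nrm1 n (v : vec n) i : Rabs (v i) <= nrm1 v.
Proof.
rewrite /nrm1 (bigD1 i) //=.
rewrite -{1}(Rplus_0_r (Rabs (v i))); apply: Rplus_le_compat_l.
apply: sum_ge0 => j; exact: Rabs_pos.
Qed.

Lemma lin_bound n (D v : vec n) K :
  (forall i, Rabs (D i) <= K) -> Rabs (lin D v) <= K * nrm1 v.
Proof.
move=> HD; apply: Rle_trans (abs_sum _ _) _.
rewrite /nrm1 -sum_scal; apply: sum_le => i; rewrite Rabs_mult.
apply: Rmult_le_compat_r; [exact: Rabs_pos | exact: HD].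
Qed.

Lemma bil_bound n (H : mat n) a b K :
  (forall j k, Rabs (H j k) <= K) -> Rabs (bil H a b) <= K * nrm1 a * nrm1 b.
Proof.
move=> HK; apply: Rle_trans (abs_sum _ _) _.
rewrite /nrm1 Rmult_assoc (Rmult_comm (\big[Rplus/0]_(i<n) _)) -Rmult_assoc.
rewrite -sum_scal; apply: sum_le => j; rewrite Rabs_mult.
apply: Rmult_le_compat_r; first exact: Rabs_pos.
exact: (lin_bound n (H j) b K (HK j)).
Qed.

Lemma dot_ge0 n (v : vec n) : 0 <= dot v v.
Proof. apply: sum_ge0 => i; nra. Qed.

Lemma dot_le_nrm1sq n (v : vec n) : dot v v <= nrm1 v * nrm1 v.
Proof.
rewrite /dot /nrm1; elim: n v => [|n IH] v; first by rewrite !big_ord0; lra.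
rewrite !big_ord_recr /=.
have := IH (fun i => v (widen_ord (leqnSn n) i)).
have := sum_ge0 (index_enum 'I_n) xpredT (fun i => Rabs (v (widen_ord (leqnSn n) i))) (fun i => Rabs_pos _).
have := Rabs_pos (v ord_max).
set S := \big[Rplus/0]_(i < n) Rabs _. set Q := \big[Rplus/0]_(i < n) _.
move=> h1 h2 h3.
have : v ord_max * v ord_max = Rabs (v ord_max) * Rabs (v ord_max).
  by rewrite -Rabs_mult Rabs_right //; nra.
nra.
Qed.

Lemma vnorm_le_nrm1 n (v : vec n) : vnorm v <= nrm1 v.
Proof.
rewrite /vnorm. rewrite -(sqrt_square (nrm1 v)); last exact: nrm1_ge0.
apply: sqrt_le_1_alt; exact: dot_le_nrm1sq.
Qed.

Lemma vnorm_ge0 n (v : vec n) : 0 <= vnorm v.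
Proof. exact: sqrt_pos. Qed.

Lemma coord_le_vnorm n (v : vec n) i : Rabs (v i) <= vnorm v.
Proof.
rewrite /vnorm -sqrt_Rsqr_abs; apply: sqrt_le_1_alt.
rewrite /dot (bigD1 i) //= /Rsqr.
rewrite -{1}(Rplus_0_r (v i * v i)); apply: Rplus_le_compat_l.
apply: sum_ge0 => j; nra.
Qed.

Lemma nrm1_le_vnorm n (v : vec n) : nrm1 v <= INR n * vnorm v.
Proof.
rewrite /nrm1 -sum_const; apply: sum_le => i; exact: coord_le_vnorm.
Qed.

Lemma nrm1_add n (a b : vec n) : nrm1 (vadd a b) <= nrm1 a + nrm1 b.
Proof. rewrite /nrm1 -big_split; apply: sum_le => i; exact: Rabs_triang. Qed.

Lemma nrm1_scale n c (a : vec n) : nrm1 (vscale c a) = Rabs c * nrm1 a.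
Proof. rewrite /nrm1 -sum_scal; apply: eq_bigr => i _; exact: Rabs_mult. Qed.

Lemma nrm1_basis n (j : 'I_n) : nrm1 (basis j) = 1.
Proof.
rewrite /nrm1 (bigD1 j) //= /basis eqxx Rabs_R1 big1 /=; first ring.
by move=> i /negbTE ->; rewrite Rabs_R0.
Qed.

Lemma nrm1_sub n (a b : vec n) : nrm1 (vsub a b) <= nrm1 a + nrm1 b.
Proof.
rewrite /nrm1 -big_split; apply: sum_le => i; rewrite /vsub /=.
apply: Rle_trans (Rabs_triang _ _) _; rewrite Rabs_Ropp; lra.
Qed.

Definition pd {N} (G : vec N -> R) (j : 'I_N) (D : vec N -> R) : Prop :=
  forall z, derivable_pt_lim (fun h => G (vadd z (vscale h (basis j)))) 0 (D z).

Lemma deriv_ext (f g : R -> R) x l :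
  (forall h, f h = g h) -> derivable_pt_lim f x l -> derivable_pt_lim g x l.
Proof.
move=> H; have -> : g = f by apply: functional_extensionality => h; rewrite H.
done.
Qed.

Lemma deriv_shift (f : R -> R) s0 l :
  derivable_pt_lim (fun h => f (s0 + h)) 0 l -> derivable_pt_lim f s0 l.
Proof.
move=> H eps Heps; have [del Hd] := H eps Heps; exists del => h h0 hd.
have := Hd h h0 hd. by rewrite !Rplus_0_l Rplus_0_r.
Qed.

Ltac vext := apply: functional_extensionality => ?; rewrite /vadd /vscale /vsub /vzero.

Lemma pd_any {N} (G : vec N -> R) j D : pd G j D ->
  forall q tau, derivable_pt_lim (fun tau => G (vadd q (vscale tau (basis j)))) tau
                  (D (vadd q (vscale tau (basis j)))).
Proof.
move=> H q tau; apply: deriv_shift.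
apply: deriv_ext (H (vadd q (vscale tau (basis j)))) => h.
congr G; vext; ring.
Qed.

Lemma MVT_any (f f' : R -> R) a b :
  (forall c, derivable_pt_lim f c (f' c)) ->
  exists c, f b - f a = f' c * (b - a) /\ Rmin a b <= c <= Rmax a b.
Proof.
move=> Hd; case: (Rtotal_order a b) => [lt|[eq|gt]].
- have [c [h1 h2]] := MVT_cor2 f f' a b lt (fun c _ => Hd c).
  exists c; split => //; rewrite Rmin_left ?Rmax_right; lra.
- subst; exists b; split; [ring| rewrite Rmin_left ?Rmax_left; lra].
- have [c [h1 h2]] := MVT_cor2 f f' b a gt (fun c _ => Hd c).
  exists c; split; [lra| rewrite Rmin_right ?Rmax_left; lra].
Qed.

Lemma Rabs_between (x y : R) : Rmin 0 y <= x <= Rmax 0 y -> Rabs x <= Rabs y.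
Proof.
rewrite /Rmin /Rmax; case: Rle_dec => H [h1 h2]; split_Rabs; lra.
Qed.

Lemma KL {N} (G : vec N -> R) m Dm p (a : vec N) c :
  pd G m Dm -> continuous_vec Dm ->
  derivable_pt_lim (fun h => G (vadd (vadd p (vscale h a)) (vscale (h*c) (basis m)))
                             - G (vadd p (vscale h a))) 0 (c * Dm p).
Proof.
move=> Hpd Hc eps Heps.
have He1 : 0 < eps / (Rabs c + 1).
  apply: Rdiv_lt_0_compat => //; have := Rabs_pos c; lra.
have [del1 [Hdel1 Hdel]] := Hc p _ He1.
have Hna := nrm1_ge0 _ a. have Hca := Rabs_pos c.
have Hd2 : 0 < del1 / (nrm1 a + Rabs c + 1) by apply: Rdiv_lt_0_compat; lra.
exists (mkposreal _ Hd2) => h hn0 /= hlt.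
rewrite !Rplus_0_l.
have -> : vadd (vadd p (vscale 0 a)) (vscale (0 * c) (basis m)) = vadd p (vscale 0 a)
  by vext; ring.
rewrite Rminus_diag Rminus_0_r.
set q := vadd p (vscale h a).
have [th [Hth Hb]] := MVT_any (fun tau => G (vadd q (vscale tau (basis m))))
  (fun tau => Dm (vadd q (vscale tau (basis m)))) 0 (h * c) (pd_any _ _ _ Hpd q).
rewrite (_ : vadd q (vscale 0 (basis m)) = q) in Hth; last by vext; ring.
rewrite Hth Rminus_0_r.
have -> : Dm (vadd q (vscale th (basis m))) * (h * c) / h - c * Dm p
          = c * (Dm (vadd q (vscale th (basis m))) - Dm p) by field.
rewrite Rabs_mult.
have Hth' := Rabs_between _ _ Hb.
have Hclose : vnorm (vsub (vadd q (vscale th (basis m))) p) < del1.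
  apply: Rle_lt_trans (vnorm_le_nrm1 _ _) _.
  have -> : vsub (vadd q (vscale th (basis m))) p = vadd (vscale h a) (vscale th (basis m))
    by rewrite /q; vext; ring.
  apply: Rle_lt_trans (nrm1_add _ _ _) _.
  rewrite !nrm1_scale nrm1_basis Rmult_1_r.
  rewrite Rabs_mult in Hth'.
  have Hh := Rabs_pos h.
  have : Rabs h * (nrm1 a + Rabs c + 1) < del1.
    have hX : 0 < nrm1 a + Rabs c + 1 by lra.
    have := Rmult_lt_compat_r _ _ _ hX hlt.
    rewrite /Rdiv Rmult_assoc Rinv_l ?Rmult_1_r; lra.
  nra.
have := Hdel _ Hclose.
set u := Rabs (_ - _) => Hu.
have : Rabs c * u <= Rabs c * (eps / (Rabs c + 1)).
  apply: Rmult_le_compat_l; lra.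
have : Rabs c * (eps / (Rabs c + 1)) < eps.
  have -> : Rabs c * (eps / (Rabs c + 1)) = eps - eps / (Rabs c + 1) by field; lra.
  lra.
lra.
Qed.

Lemma lin_add n (D a b : vec n) : lin D (vadd a b) = lin D a + lin D b.
Proof. rewrite /lin -big_split; apply: eq_bigr => i _ /=; rewrite /vadd; ring. Qed.
Lemma lin_scale n (D a : vec n) c : lin D (vscale c a) = c * lin D a.
Proof. rewrite /lin -sum_scal; apply: eq_bigr => i _ /=; rewrite /vscale; ring. Qed.
Lemma lin_basis n (D : vec n) j : lin D (basis j) = D j.
Proof.
rewrite /lin (bigD1 j) //= /basis eqxx big1 /=; first ring.
by move=> i /negbTE ->; ring.
Qed.
Lemma lin_zero n (D : vec n) : lin D (fun _ => 0) = 0.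
Proof. rewrite /lin big1 // => i _; ring. Qed.

Definition trunc {N} (m : nat) (w : vec N) : vec N :=
  fun i => if (i < m)%nat then w i else 0.

Lemma D1_trunc {N} (G : vec N -> R) (D : 'I_N -> vec N -> R) (w : vec N) :
  (forall j, pd G j (D j)) -> (forall j, continuous_vec (D j)) ->
  forall m p, derivable_pt_lim (fun h => G (vadd p (vscale h (trunc m w)))) 0
                (lin (fun j => D j p) (trunc m w)).
Proof.
move=> Hpd Hc; elim=> [|m IH] p.
- have -> : trunc 0 w = (fun _ => 0) by apply: functional_extensionality => i.
  rewrite lin_zero.
  apply: (deriv_ext (fun _ => G p)); last exact: derivable_pt_lim_const.
  by move=> h; congr G; vext; ring.
- case: (ltnP m N) => Hm.
  + set mo := Ordinal Hm.
    have Ht : trunc m.+1 w = vadd (trunc m w) (vscale (w mo) (basis mo)).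
      apply: functional_extensionality => x; rewrite /vadd /vscale /trunc /basis.
      case: (ltngtP x m) => Him.
      * have -> : (x == mo) = false by apply/negbTE; rewrite -val_eqE /= neq_ltn Him.
        by rewrite ltnS ltnW //; ring.
      * have -> : (x == mo) = false by apply/negbTE; rewrite -val_eqE /= neq_ltn Him orbT.
        have h1 : (x < m.+1)%nat = false by rewrite ltnS leqNgt Him.
        have h2 : (x < m)%nat = false by rewrite ltnNge ltnW.
        by rewrite h1; ring.
      * have -> : (x == mo) by rewrite -val_eqE /= Him.
        have -> : x = mo by apply: val_inj.
        have -> : (mo < m.+1)%nat by rewrite /= ltnSn.
        ring.
    rewrite Ht lin_add lin_scale lin_basis.
    apply: (deriv_ext (fun h =>
       (G (vadd (vadd p (vscale h (trunc m w))) (vscale (h * w mo) (basis mo)))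
        - G (vadd p (vscale h (trunc m w)))) + G (vadd p (vscale h (trunc m w))))).
      by move=> h; rewrite Rplus_comm Rplus_minus; congr G; vext; ring.
    rewrite Rplus_comm; apply: derivable_pt_lim_plus; last exact: IH.
    exact: KL.
  + have -> : trunc m.+1 w = trunc m w.
      apply: functional_extensionality => i; rewrite /trunc.
      by rewrite (leq_trans (ltn_ord i) Hm) (ltn_trans (leq_trans (ltn_ord i) Hm)).
    exact: IH.
Qed.

Lemma D1 {N} (G : vec N -> R) (D : 'I_N -> vec N -> R) (p w : vec N) s0 :
  (forall j, pd G j (D j)) -> (forall j, continuous_vec (D j)) ->
  derivable_pt_lim (fun s => G (vadd p (vscale s w))) s0
     (lin (fun j => D j (vadd p (vscale s0 w))) w).
Proof.
move=> Hpd Hc; apply: deriv_shift.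
have Hw : trunc N w = w by apply: functional_extensionality => i; rewrite /trunc ltn_ord.
have := D1_trunc G D w Hpd Hc N (vadd p (vscale s0 w)); rewrite Hw.
apply: deriv_ext => h; congr G; vext; ring.
Qed.

Lemma deriv_val (f : R -> R) x l l' : derivable_pt_lim f x l -> l = l' -> derivable_pt_lim f x l'.
Proof. by move=> H <-. Qed.

Lemma taylor1D (f f1 f2 f3 : R -> R) M :
  (forall s, derivable_pt_lim f s (f1 s)) ->
  (forall s, derivable_pt_lim f1 s (f2 s)) ->
  (forall s, derivable_pt_lim f2 s (f3 s)) ->
  (forall s, 0 <= s <= 1 -> Rabs (f3 s) <= M) ->
  Rabs (f 1 - f 0 - f1 0 - / 2 * f2 0) <= M / 2.
Proof.
move=> H1 H2 H3 HM.
pose g s := f s + f1 s * (1 - s) + / 2 * (f2 s * ((1 - s) * (1 - s))).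
pose g' s := / 2 * (f3 s * ((1 - s) * (1 - s))).
have Hg : forall s, derivable_pt_lim g s (g' s).
  move=> s; rewrite /g /g'.
  have Hl : derivable_pt_lim (fun s => 1 - s) s (-1).
    apply: (deriv_val _ _ (0 - 1)); last ring.
    apply: derivable_pt_lim_minus; [exact: derivable_pt_lim_const | exact: derivable_pt_lim_id].
  have Hq : derivable_pt_lim (fun s => (1 - s) * (1 - s)) s (-1 * (1 - s) + (1 - s) * -1).
    exact: (derivable_pt_lim_mult (fun s => 1 - s) (fun s => 1 - s)).
  apply: (deriv_val _ _ (f1 s + (f2 s * (1 - s) + f1 s * -1)
            + / 2 * (f3 s * ((1 - s) * (1 - s)) + f2 s * (-1 * (1 - s) + (1 - s) * -1)))); last field.
  apply: derivable_pt_lim_plus.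
    apply: derivable_pt_lim_plus; first exact: H1.
    exact: (derivable_pt_lim_mult f1 (fun s => 1 - s)).
  apply: (derivable_pt_lim_scal (fun s => f2 s * ((1 - s) * (1 - s)))).
  exact: (derivable_pt_lim_mult f2 (fun s => (1 - s) * (1 - s))).
have [c [Hc Hb]] := MVT_any g g' 0 1 Hg.
rewrite Rmin_left ?Rmax_right in Hb; try lra.
have -> : f 1 - f 0 - f1 0 - / 2 * f2 0 = g 1 - g 0 by rewrite /g; ring.
rewrite Hc /g' Rminus_0_r Rmult_1_r Rabs_mult Rabs_mult.
have := HM c Hb. have := Rabs_pos (f3 c).
rewrite (Rabs_right (/2)); last lra.
rewrite (Rabs_right ((1 - c) * (1 - c))); last nra.
move=> h1 h2.
have : (1 - c) * (1 - c) <= 1 by nra.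
nra.
Qed.

Lemma deriv_sum {I : Type} (r : seq I) (F : I -> R -> R) (F' : I -> R) s :
  (forall i, derivable_pt_lim (F i) s (F' i)) ->
  derivable_pt_lim (fun s => \big[Rplus/0]_(i <- r) F i s) s (\big[Rplus/0]_(i <- r) F' i).
Proof.
move=> H; elim: r => [|a r IH].
- rewrite big_nil; apply: (deriv_ext (fun _ => 0)); last exact: derivable_pt_lim_const.
  by move=> h; rewrite big_nil.
- rewrite big_cons; apply: (deriv_ext (fun s => F a s + \big[Rplus/0]_(i <- r) F i s)).
    by move=> h; rewrite big_cons.
  exact: (derivable_pt_lim_plus (F a)).
Qed.

Lemma deriv_mulc (F : R -> R) l c s :
  derivable_pt_lim F s l -> derivable_pt_lim (fun s => F s * c) s (l * c).
Proof.
move=> H; apply: (deriv_val _ _ (l * c + F s * 0)); last ring.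
apply: (derivable_pt_lim_mult F (fun _ => c)) => //; exact: derivable_pt_lim_const.
Qed.

Lemma deriv_lin {N} (F : 'I_N -> R -> R) (F' : 'I_N -> R) (w : vec N) s :
  (forall i, derivable_pt_lim (F i) s (F' i)) ->
  derivable_pt_lim (fun s => lin (fun i => F i s) w) s (lin F' w).
Proof. move=> H; apply: deriv_sum => i; exact: deriv_mulc. Qed.

Lemma taylor2 {N} (G : vec N -> R) (G1 : 'I_N -> vec N -> R)
  (G2 : 'I_N -> 'I_N -> vec N -> R) (G3 : 'I_N -> 'I_N -> 'I_N -> vec N -> R) p w B :
  (forall j, pd G j (G1 j)) -> (forall j, continuous_vec (G1 j)) ->
  (forall j k, pd (G1 j) k (G2 j k)) -> (forall j k, continuous_vec (G2 j k)) ->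
  (forall j k l, pd (G2 j k) l (G3 j k l)) -> (forall j k l, continuous_vec (G3 j k l)) ->
  (forall s, 0 <= s <= 1 -> forall j k l, Rabs (G3 j k l (vadd p (vscale s w))) <= B) ->
  Rabs (G (vadd p w) - G p - lin (fun j => G1 j p) w - / 2 * bil (fun j k => G2 j k p) w w)
    <= B * nrm1 w ^ 3 / 2.
Proof.
move=> P1 C1 P2 C2 P3 C3 HB.
pose q s := vadd p (vscale s w).
pose f s := G (q s).
pose f1 s := lin (fun j => G1 j (q s)) w.
pose f2 s := lin (fun j => lin (fun k => G2 j k (q s)) w) w.
pose f3 s := lin (fun j => lin (fun k => lin (fun l => G3 j k l (q s)) w) w) w.
have T := taylor1D f f1 f2 f3 (B * nrm1 w ^ 3).
have E1 : vadd p (vscale 1 w) = vadd p w by vext; ring.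
have E0 : vadd p (vscale 0 w) = p by vext; ring.
rewrite /f /f1 /f2 /q E1 E0 in T.
apply: T.
- move=> s; exact: D1.
- move=> s; apply: deriv_lin => j; exact: D1.
- move=> s; apply: deriv_lin => j; apply: deriv_lin => k; exact: D1.
- move=> s Hs; rewrite /f3.
  have Hw := nrm1_ge0 _ w.
  have H1 : forall j k, Rabs (lin (fun l => G3 j k l (q s)) w) <= B * nrm1 w.
    move=> j k; apply: lin_bound => l; exact: HB.
  have H2 : forall j, Rabs (lin (fun k => lin (fun l => G3 j k l (q s)) w) w) <= B * nrm1 w * nrm1 w.
    move=> j; apply: lin_bound => k; exact: H1.
  apply: Rle_trans (lin_bound _ _ _ _ H2) _; right; ring.
Qed.

Lemma choice_fun {A B : Type} (P : A -> B -> Prop) :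
  (forall a, exists b, P a b) -> exists f : A -> B, forall a, P a (f a).
Proof.
move=> H; exists (fun a => proj1_sig (constructive_indefinite_description _ (H a))) => a.
exact: proj2_sig.
Qed.

Definition incr (phi : nat -> nat) := forall k, (phi k < phi k.+1)%nat.

Lemma incr_ge phi : incr phi -> forall k, (k <= phi k)%nat.
Proof. move=> H; elim=> [|k IH] //; exact: leq_ltn_trans IH (H k). Qed.

Lemma incr_mono phi : incr phi -> forall a b, (a <= b)%nat -> (phi a <= phi b)%nat.
Proof.
move=> H a; elim=> [|b IH]; first by rewrite leqn0 => /eqP ->.
rewrite leq_eqVlt => /orP [/eqP ->|h] //.
exact: leq_trans (IH h) (ltnW (H b)).
Qed.

Lemma BW1 (u : nat -> R) L : (forall k, Rabs (u k) <= L) ->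
  exists phi l, incr phi /\ forall eps, 0 < eps -> exists M, forall k, (M <= k)%nat ->
    Rabs (u (phi k) - l) < eps.
Proof.
move=> Hu.
have [l Hl] := Bolzano_Weierstrass u (fun c => - L <= c <= L) (compact_P3 _ _)
  (fun k => let h := Hu k in ltac:(split_Rabs; lra)).
have Hp : forall (Nn k : nat), exists p, (Nn <= p)%nat /\ Rabs (u p - l) < / INR k.+1.
  move=> Nn k.
  have hk : 0 < / INR k.+1 by apply: Rinv_0_lt_compat; apply: lt_0_INR; apply/ltP.
  have hn : neighbourhood (fun y => Rabs (y - l) < / INR k.+1) l.
    by exists (mkposreal _ hk) => y hy; exact: hy.
  have [p [hp1 hp2]] := Hl (fun y => Rabs (y - l) < / INR k.+1) Nn hn.
  by exists p; split => //; apply/leP.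
have [pick Hpick] := choice_fun (fun (nk : nat * nat) p => (nk.1 <= p)%nat /\ Rabs (u p - l) < / INR nk.2.+1)
  (fun nk => Hp nk.1 nk.2).
pose phi := fix phi k := match k with O => pick (0%nat, 0%nat) | S k' => pick ((phi k').+1, k) end.
exists phi, l; split.
- move=> k; exact: (proj1 (Hpick ((phi k).+1, k.+1))).
- move=> eps heps.
  have [M [hM1 hM2]] := archimed_cor1 eps heps.
  exists M => k hk.
  have hb : Rabs (u (phi k) - l) < / INR k.+1.
    by case: k hk => [|k] hk; [exact: (proj2 (Hpick (0%nat,0%nat))) | exact: (proj2 (Hpick ((phi k).+1, k.+1)))].
  apply: Rlt_le_trans hb _; apply: Rle_trans _ (Rlt_le _ _ hM1).
  apply: Rinv_le_contravar; first by apply: lt_0_INR.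
  apply: le_INR; apply/leP; exact: leq_trans hk (leqnSn _).
Qed.

Lemma incr_strict phi : incr phi -> forall a b, (a < b)%nat -> (phi a < phi b)%nat.
Proof. move=> H a b hab; exact: leq_trans (H a) (incr_mono _ H _ _ hab). Qed.

Lemma BWN N (s : nat -> vec N) L : (forall k i, Rabs (s k i) <= L) ->
  exists phi (l : vec N), incr phi /\ forall i eps, 0 < eps ->
    exists M, forall k, (M <= k)%nat -> Rabs (s (phi k) i - l i) < eps.
Proof.
move=> Hs.
suff : forall m, exists phi (l : vec N), incr phi /\ forall (i : 'I_N) eps, (i < m)%nat -> 0 < eps ->
    exists M, forall k, (M <= k)%nat -> Rabs (s (phi k) i - l i) < eps.
  move=> /(_ N) [phi [l [H1 H2]]]; exists phi, l; split => // i eps he.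
  exact: H2.
elim=> [|m [phi [l [Hi Hc]]]].
- by exists (fun k => k), (fun _ => 0); split => // k.
- case: (ltnP m N) => Hm.
  + set mo := Ordinal Hm.
    have [psi [lm [Hpsi Hlm]]] := BW1 (fun k => s (phi k) mo) L (fun k => Hs _ _).
    exists (fun k => phi (psi k)), (fun i => if i == mo then lm else l i); split.
      by move=> k; apply: incr_strict.
    move=> i eps hi he; case: eqP => [->|hne].
      by have [M HM] := Hlm eps he; exists M.
    have him : (i < m)%nat.
      rewrite ltnS leq_eqVlt in hi; case/orP: hi => // /eqP hh.
      by exfalso; apply: hne; apply: val_inj.
    have [M HM] := Hc i eps him he; exists M => k hk.
    apply: HM; exact: leq_trans hk (incr_ge _ Hpsi k).
  + exists phi, l; split => // i eps hi he; apply: Hc => //.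
    exact: leq_trans (ltn_ord i) Hm.
Qed.

Lemma cont_bounded N (F : vec N -> R) L : continuous_vec F ->
  exists B, forall q, nrm1 q <= L -> Rabs (F q) <= B.
Proof.
move=> HF; apply: NNPP => Hno.
have Hs : forall k : nat, exists q, nrm1 q <= L /\ INR k < Rabs (F q).
  move=> k; apply: NNPP => hk; apply: Hno; exists (INR k) => q hq.
  apply: Rnot_lt_le => hlt; apply: hk; by exists q.
have [s Hsk] := choice_fun _ Hs.
have [phi [l [Hphi Hl]]] := BWN N s L (fun k i => Rle_trans _ _ _ (coord_le_nrm1 _ _ i) (proj1 (Hsk k))).
have [del [Hdel HFd]] := HF l 1 Rlt_0_1.
have hc : 0 < del / (INR N + 1) by apply: Rdiv_lt_0_compat => //; have := pos_INR N; lra.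
have [Mf HMf] := choice_fun (fun i M => forall k, (M <= k)%nat -> Rabs (s (phi k) i - l i) < del / (INR N + 1))
  (fun i => Hl i _ hc).
pose M := \max_(i < N) Mf i.
have [n0 Hn0] := INR_archimed 1 (Rabs (F l) + 1) Rlt_0_1.
pose k := maxn M n0.
have Hclose : vnorm (vsub (s (phi k)) l) < del.
  apply: Rle_lt_trans (vnorm_le_nrm1 _ _) _.
  apply: Rle_lt_trans (_ : _ <= INR N * (del / (INR N + 1))) _.
    rewrite /nrm1 -sum_const; apply: sum_le => i; apply: Rlt_le; apply: HMf.
    exact: leq_trans (leq_bigmax i) (leq_maxl _ _).
  have := pos_INR N => hN.
  have -> : INR N * (del / (INR N + 1)) = del - del / (INR N + 1) by field; lra.
  lra.
have := HFd _ Hclose.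
have := proj2 (Hsk (phi k)).
have : INR n0 <= INR (phi k).
  apply: le_INR; apply/leP; exact: leq_trans (leq_maxr M n0) (incr_ge _ Hphi k).
move=> h1 h2 h3.
have := Rabs_triang_inv (F (s (phi k))) (F l).
lra.
Qed.

Lemma vadd_sub n (a b : vec n) : vadd (vsub a b) b = a.
Proof. vext; ring. Qed.

Lemma seq_compact_bounded n (K0 : vec n -> Prop) : seq_compact K0 ->
  exists LK, forall k, K0 k -> nrm1 k <= LK.
Proof.
move=> HK; apply: NNPP => Hno.
have Hs : forall k : nat, exists q, K0 q /\ INR k < nrm1 q.
  move=> k; apply: NNPP => hk; apply: Hno; exists (INR k) => q hq.
  apply: Rnot_lt_le => hlt; apply: hk; by exists q.
have [s Hsk] := choice_fun _ Hs.
have [phi [l [Hphi [Hl Hc]]]] := HK s (fun k => proj1 (Hsk k)).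
have [M HM] := Hc 1 Rlt_0_1.
have [n0 Hn0] := INR_archimed 1 (nrm1 l + INR n) Rlt_0_1.
pose k := maxn M n0.
have h1 := HM k (leq_maxl _ _).
have h2 := proj2 (Hsk (phi k)).
have h3 : INR n0 <= INR (phi k).
  apply: le_INR; apply/leP; exact: leq_trans (leq_maxr M n0) (incr_ge _ Hphi k).
have h4 := nrm1_add _ (vsub (s (phi k)) l) l. rewrite vadd_sub in h4.
have h5 := nrm1_le_vnorm _ (vsub (s (phi k)) l).
have := pos_INR n.
have : INR n * vnorm (vsub (s (phi k)) l) <= INR n * 1.
  apply: Rmult_le_compat_l; [exact: pos_INR | lra].
lra.
Qed.

Lemma smooth3 {N} (F : vec N -> R) : smooth F ->
  continuous_vec F /\ exists (G1 : 'I_N -> vec N -> R) (G2 : 'I_N -> 'I_N -> vec N -> R)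
    (G3 : 'I_N -> 'I_N -> 'I_N -> vec N -> R),
    (forall j, pd F j (G1 j)) /\ (forall j, continuous_vec (G1 j)) /\
    (forall j k, pd (G1 j) k (G2 j k)) /\ (forall j k, continuous_vec (G2 j k)) /\
    (forall j k l, pd (G2 j k) l (G3 j k l)) /\ (forall j k l, continuous_vec (G3 j k l)).
Proof.
move=> HF; have [C0 H1] := HF 3%nat; split => //.
have [G1 HG1] := choice_fun _ H1.
have H2 : forall jk : 'I_N * 'I_N, exists G, pd (G1 jk.1) jk.2 G /\ Ck 1 G.
  move=> [j k] /=; exact: (proj2 (proj2 (HG1 j)) k).
have [G2 HG2] := choice_fun _ H2.
have H3 : forall jkl : 'I_N * 'I_N * 'I_N, exists G, pd (G2 jkl.1) jkl.2 G /\ Ck 0 G.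
  move=> [[j k] l] /=; exact: (proj2 (proj2 (HG2 (j, k))) l).
have [G3 HG3] := choice_fun _ H3.
exists G1, (fun j k => G2 (j, k)), (fun j k l => G3 (j, k, l)).
split; first by move=> j; exact: (proj1 (HG1 j)).
split; first by move=> j; exact: (proj1 (proj2 (HG1 j))).
split; first by move=> j k; exact: (proj1 (HG2 (j, k))).
split; first by move=> j k; exact: (proj1 (proj2 (HG2 (j, k)))).
split; first by move=> j k l; exact: (proj1 (HG3 (j, k, l))).
by move=> j k l; exact: (proj2 (HG3 (j, k, l))).
Qed.

Definition vpack {n} (a b : vec n) : vec (n + n) :=
  fun k => match fintype.split k with inl i => a i | inr i => b i end.

Lemma vpack_l n (a b : vec n) i : vpack a b (lshift n i) = a i.
Proof. by rewrite /vpack (unsplitK (inl i)). Qed.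
Lemma vpack_r n (a b : vec n) i : vpack a b (rshift n i) = b i.
Proof. by rewrite /vpack (unsplitK (inr i)). Qed.
Lemma vcons_0 N t (z : vec N) : vcons t z ord0 = t.
Proof. by rewrite /vcons unlift_none. Qed.
Lemma vcons_l N t (z : vec N) i : vcons t z (lift ord0 i) = z i.
Proof. by rewrite /vcons liftK. Qed.
Lemma vfst_pack n (a b : vec n) : vfst (vpack a b) = a.
Proof. apply: functional_extensionality => i; exact: vpack_l. Qed.
Lemma vsnd_pack n (a b : vec n) : vsnd (vpack a b) = b.
Proof. apply: functional_extensionality => i; exact: vpack_r. Qed.

Lemma basis_ll N (j i : 'I_N) : basis (lift ord0 j) (lift ord0 i) = basis j i.
Proof. by rewrite /basis (inj_eq (@lift_inj _ ord0)). Qed.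
Lemma basis_l0 N (j : 'I_N) : basis (lift ord0 j) ord0 = 0.
Proof. by rewrite /basis (negbTE (neq_lift _ _)). Qed.
Lemma basis_lsls n (j i : 'I_n) : basis (lshift n j) (lshift n i) = basis j i.
Proof. by rewrite /basis -val_eqE /= val_eqE. Qed.
Lemma basis_rsrs n (j i : 'I_n) : basis (rshift n j) (rshift n i) = basis j i.
Proof. by rewrite /basis -val_eqE /= eqn_add2l val_eqE. Qed.
Lemma basis_lsrs n (j i : 'I_n) : basis (lshift n j) (rshift n i) = 0.
Proof.
rewrite /basis; have -> // : (rshift n i == lshift n j) = false.
apply/negbTE; rewrite -val_eqE /= eq_sym neq_ltn.
by rewrite (leq_trans (ltn_ord j) (leq_addr _ _)).
Qed.
Lemma basis_rsls n (j i : 'I_n) : basis (rshift n j) (lshift n i) = 0.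
Proof.
rewrite /basis; have -> // : (lshift n i == rshift n j) = false.
apply/negbTE; rewrite -val_eqE /= neq_ltn.
by rewrite (leq_trans (ltn_ord i) (leq_addr _ _)).
Qed.

Lemma cons_ind N (P : 'I_N.+1 -> Prop) : P ord0 -> (forall i, P (lift ord0 i)) -> forall k, P k.
Proof. by move=> h0 hl k; case: (unliftP ord0 k) => [i ->|->]. Qed.
Lemma pack_ind n (P : 'I_(n + n) -> Prop) :
  (forall i, P (lshift n i)) -> (forall i, P (rshift n i)) -> forall k, P k.
Proof. by move=> hl hr k; rewrite -(splitK k); case: (fintype.split k). Qed.

Ltac cases_cons k := elim/cons_ind: k => [|k];
  rewrite ?vcons_0 ?vcons_l ?basis_l0 ?basis_ll.
Ltac cases_pack k := elim/pack_ind: k => k;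
  rewrite ?vpack_l ?vpack_r ?basis_lsls ?basis_rsrs ?basis_lsrs ?basis_rsls.

Lemma lin_cons N (D : vec N.+1) t u : lin D (vcons t u) = D ord0 * t + lin (fun i => D (lift ord0 i)) u.
Proof. rewrite /lin big_ord_recl vcons_0 /=; congr (_ + _); apply: eq_bigr => i _; by rewrite vcons_l. Qed.
Lemma lin_pack n (D : vec (n + n)) a b :
  lin D (vpack a b) = lin (fun i => D (lshift n i)) a + lin (fun i => D (rshift n i)) b.
Proof.
rewrite /lin big_split_ord /=; congr (_ + _); apply: eq_bigr => i _;
  by rewrite ?vpack_l ?vpack_r.
Qed.
Lemma nrm1_cons N t (u : vec N) : nrm1 (vcons t u) = Rabs t + nrm1 u.
Proof. rewrite /nrm1 big_ord_recl vcons_0 /=; congr (_ + _); apply: eq_bigr => i _; by rewrite vcons_l. Qed.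
Lemma nrm1_pack n (a b : vec n) : nrm1 (vpack a b) = nrm1 a + nrm1 b.
Proof.
rewrite /nrm1 big_split_ord /=; congr (_ + _); apply: eq_bigr => i _;
  by rewrite ?vpack_l ?vpack_r.
Qed.
Lemma bil_lin N (H : mat N) a b : bil H a b = lin (fun j => lin (H j) b) a.
Proof. by []. Qed.
Lemma bil_cons0 N (H : mat N.+1) u u' :
  bil H (vcons 0 u) (vcons 0 u') = bil (fun i j => H (lift ord0 i) (lift ord0 j)) u u'.
Proof.
rewrite !bil_lin lin_cons Rmult_0_r Rplus_0_l; apply: eq_bigr => i _.
by rewrite lin_cons Rmult_0_r Rplus_0_l.
Qed.

Lemma vec_cons_eq N t (z : vec N) h j :
  vcons t (vadd z (vscale h (basis j))) = vadd (vcons t z) (vscale h (basis (lift ord0 j))).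
Proof. apply: functional_extensionality => k; rewrite /vadd /vscale; cases_cons k; rewrite /vadd /vscale //; ring. Qed.

Lemma lin_sumD n {I : finType} (F : I -> vec n) (v : vec n) :
  lin (fun l => \big[Rplus/0]_(k : I) F k l) v = \big[Rplus/0]_(k : I) lin (F k) v.
Proof.
rewrite /lin (eq_bigr (fun l => \big[Rplus/0]_(k : I) (F k l * v l))); last first.
  by move=> l _; rewrite big_distrl.
by rewrite (exchange_big_dep xpredT).
Qed.

Lemma lin_M n K (D : vec K) (M : 'I_K -> 'I_n -> R) (w : vec K) (v : vec n) :
  (forall k, w k = \big[Rplus/0]_(j < n) (M k j * v j)) ->
  lin D w = lin (fun j => \big[Rplus/0]_(k < K) (D k * M k j)) v.
Proof.
move=> Hw; rewrite /lin.
under eq_bigr => k _ do rewrite Hw big_distrr /=.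
rewrite exchange_big /=; apply: eq_bigr => j _.
rewrite big_distrl /=; apply: eq_bigr => k _; ring.
Qed.

Lemma lin_comm n (a b : vec n) : lin a b = lin b a.
Proof. rewrite /lin; apply: eq_bigr => i _; ring. Qed.

Lemma lin_subl n (f g v : vec n) : lin (fun j => f j - g j) v = lin f v - lin g v.
Proof.
rewrite /lin /Rminus -(Rmult_1_l (\big[Rplus/0]_(i<n) (g i * v i))).
rewrite Ropp_mult_distr_l -sum_scal -big_split /=; apply: eq_bigr => i _ /=; ring.
Qed.

Lemma lin_sub n (D a b : vec n) : lin D (vsub a b) = lin D a - lin D b.
Proof. rewrite lin_comm (lin_comm _ D a) (lin_comm _ D b); exact: lin_subl. Qed.

Lemma lin_mulc n (D v : vec n) c : lin D v * c = lin (fun l => D l * c) v.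
Proof. rewrite /lin big_distrl /=; apply: eq_bigr => i _; ring. Qed.

Lemma QF n K (H : 'I_K -> 'I_K -> R) (M : 'I_K -> 'I_n -> R) (w : vec K) (v : vec n) :
  (forall k, w k = \big[Rplus/0]_(j < n) (M k j * v j)) ->
  bil H w w = bil (fun j l => \big[Rplus/0]_(k < K) \big[Rplus/0]_(k' < K) (M k j * H k k' * M k' l)) v v.
Proof.
move=> Hw.
have E : forall j, \big[Rplus/0]_(k < K) (lin (H k) w * M k j)
   = lin (fun l => \big[Rplus/0]_(k < K) \big[Rplus/0]_(k' < K) (M k j * H k k' * M k' l)) v.
  move=> j.
  rewrite (eq_bigr (fun k => lin (fun l => \big[Rplus/0]_(k' < K) (H k k' * M k' l) * M k j) v)); last first.
    by move=> k _; rewrite (lin_M _ _ _ M w v Hw) lin_mulc.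
  rewrite -lin_sumD; apply: eq_bigr => l _; congr (_ * _).
  apply: eq_bigr => k _; rewrite big_distrl /=; apply: eq_bigr => k' _; ring.
rewrite !bil_lin (lin_M _ _ _ M w v Hw) /lin; apply: eq_bigr => j _; by rewrite E.
Qed.

Lemma lin_scall n (f v : vec n) c : lin (fun k => c * f k) v = c * lin f v.
Proof. rewrite /lin -sum_scal; apply: eq_bigr => i _; ring. Qed.

Lemma bil_subm n (A1 A2 : mat n) v :
  bil (fun j k => A1 j k - A2 j k) v v = bil A1 v v - bil A2 v v.
Proof.
rewrite !bil_lin -lin_subl /lin; apply: eq_bigr => j _; congr (_ * _).
exact: lin_subl.
Qed.

Lemma bil_summ n (c : vec n) (X : 'I_n -> mat n) v :
  bil (fun j k => \big[Rplus/0]_(i < n) (c i * X i j k)) v v = lin c (fun i => bil (X i) v v).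
Proof.
rewrite bil_lin {1}/lin.
rewrite (eq_bigr (fun j => \big[Rplus/0]_(i < n) (c i * lin (X i j) v) * v j)); last first.
  by move=> j _; rewrite lin_sumD; congr (_ * _); apply: eq_bigr => i _; rewrite lin_scall.
rewrite (eq_bigr (fun j => \big[Rplus/0]_(i < n) (c i * lin (X i j) v * v j))); last first.
  by move=> j _; rewrite big_distrl.
rewrite (exchange_big_dep xpredT) //= /lin; apply: eq_bigr => i _.
rewrite big_distrr /=; apply: eq_bigr => j _; ring.
Qed.

Lemma bil_diff n (H : mat n) a b K :
  (forall j k, Rabs (H j k) <= K) ->
  Rabs (bil H a a - bil H b b) <= K * nrm1 (vsub a b) * (nrm1 a + nrm1 b).
Proof.
move=> HK.
have E1 : bil H a a - bil H b a = bil H (vsub a b) a by rewrite !bil_lin lin_sub.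
have E2 : bil H b a - bil H b b = bil H b (vsub a b).
  rewrite !bil_lin -lin_subl; congr (lin _ b); apply: functional_extensionality => j; by rewrite lin_sub.
have -> : bil H a a - bil H b b = bil H (vsub a b) a + bil H b (vsub a b) by rewrite -E1 -E2; ring.
apply: Rle_trans (Rabs_triang _ _) _.
have h1 := bil_bound _ H (vsub a b) a K HK.
have h2 := bil_bound _ H b (vsub a b) K HK.
nra.
Qed.

Lemma qform_bil n (M : mat n) v : qform M v = bil M v v.
Proof. rewrite /qform /dot /bil /mulmv; apply: eq_bigr => i _; ring. Qed.

Lemma sum_basis n (v : vec n) i : \big[Rplus/0]_(j < n) (basis j i * v j) = v i.
Proof.
rewrite (bigD1 i) //= /basis eqxx big1 /=; first ring.
by move=> j hj; rewrite eq_sym (negbTE hj); ring.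
Qed.

Lemma mulmv_id n (v : vec n) : mulmv idmat v = v.
Proof.
apply: functional_extensionality => i; rewrite /mulmv /idmat.
rewrite (bigD1 i) //= eqxx big1 /=; first ring.
by move=> j hj; rewrite eq_sym (negbTE hj); ring.
Qed.

Lemma mulmv_mmul n (A B : mat n) v : mulmv (mmul A B) v = mulmv A (mulmv B v).
Proof.
apply: functional_extensionality => i; rewrite /mulmv /mmul.
rewrite (eq_bigr (fun k => \big[Rplus/0]_(j < n) (A i j * B j k * v k))); last first.
  by move=> k _; rewrite big_distrl.
rewrite (exchange_big_dep xpredT) //=; apply: eq_bigr => j _.
rewrite big_distrr /=; apply: eq_bigr => k _; ring.
Qed.

Lemma fin_bound {N} (I : finType) (F : I -> vec N -> R) L :
  (forall i, continuous_vec (F i)) ->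
  exists B, 0 <= B /\ forall i q, nrm1 q <= L -> Rabs (F i q) <= B.
Proof.
move=> HF.
have [Bf HB] := choice_fun _ (fun i => cont_bounded N (F i) L (HF i)).
exists (\big[Rplus/0]_(i : I) Rabs (Bf i)); split.
  by apply: sum_ge0 => i; exact: Rabs_pos.
move=> i q hq; apply: Rle_trans (HB i q hq) _.
apply: Rle_trans (Rle_abs _) _.
rewrite (bigD1 i) //=.
rewrite -{1}(Rplus_0_r (Rabs (Bf i))); apply: Rplus_le_compat_l.
apply: sum_ge0 => j; exact: Rabs_pos.
Qed.

Ltac vsolve := apply: functional_extensionality;
  elim/cons_ind => [|k]; rewrite ?vcons_0 ?vcons_l /vadd /vscale /vsub /vzero ?vcons_0 ?vcons_l ?basis_l0 ?basis_ll;
  try (match goal with kk : 'I_ _ |- _ => move: kk end;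
       elim/pack_ind => kk; rewrite ?vpack_l ?vpack_r ?basis_lsls ?basis_rsrs ?basis_lsrs ?basis_rsls);
  rewrite /=; try ring.

Lemma V1 N t (z0 v : vec N) : vadd (vcons t z0) (vcons 0 v) = vcons t (vadd z0 v).
Proof. vsolve. Qed.
Lemma V2 N t (z0 v : vec N) s : vadd (vcons t z0) (vscale s (vcons 0 v)) = vcons t (vadd z0 (vscale s v)).
Proof. vsolve. Qed.
Lemma V3 n t (z0 y v : vec n) :
  vadd (vcons t (vpack vzero z0)) (vcons 0 (vpack y v)) = vcons t (vpack y (vadd z0 v)).
Proof. vsolve. Qed.
Lemma V4 n t (z0 y v : vec n) s :
  vadd (vcons t (vpack vzero z0)) (vscale s (vcons 0 (vpack y v)))
  = vcons t (vpack (vscale s y) (vadd z0 (vscale s v))).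
Proof. vsolve. Qed.
Lemma V5 n t (z0 : vec n) h i :
  vcons t (vpack (vscale h (basis i)) z0)
  = vadd (vcons t (vpack vzero z0)) (vscale h (basis (lift ord0 (lshift n i)))).
Proof. vsolve. Qed.
Lemma V6 n t (z0 : vec n) h i :
  vcons t (vpack vzero (vadd z0 (vscale h (basis i))))
  = vadd (vcons t (vpack vzero z0)) (vscale h (basis (lift ord0 (rshift n i)))).
Proof. vsolve. Qed.

Lemma pd_unique {N} (G : vec N -> R) D j z l :
  pd G j D -> derivable_pt_lim (fun h => G (vadd z (vscale h (basis j)))) 0 l -> D z = l.
Proof. move=> H1 H2; exact: uniqueness_limite (H1 z) H2. Qed.

Lemma nrm1_bound n (u : vec n) c : (forall i, Rabs (u i) <= c) -> nrm1 u <= INR n * c.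
Proof. move=> H; rewrite /nrm1 -sum_const; exact: sum_le. Qed.

Lemma P6lin n (J : mat n) (gy gz v : vec n) :
  (forall j, \big[Rplus/0]_(i < n) (J i j * gy i) = gz j) -> lin gz v = lin gy (mulmv J v).
Proof.
move=> H; rewrite (lin_M _ _ gy J (mulmv J v) v) //.
rewrite /lin; apply: eq_bigr => j _; rewrite -H; congr (_ * _).
apply: eq_bigr => i _; ring.
Qed.

Definition Tay3 {N} (G : vec N -> R) (G1 : 'I_N -> vec N -> R)
  (G2 : 'I_N -> 'I_N -> vec N -> R) (G3 : 'I_N -> 'I_N -> 'I_N -> vec N -> R) : Prop :=
  continuous_vec G /\
    (forall j, pd G j (G1 j)) /\ (forall j, continuous_vec (G1 j)) /\
    (forall j k, pd (G1 j) k (G2 j k)) /\ (forall j k, continuous_vec (G2 j k)) /\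
    (forall j k l, pd (G2 j k) l (G3 j k l)) /\ (forall j k l, continuous_vec (G3 j k l)).

Lemma strip3 {N} T (F : R -> vec N -> R) : smooth_strip T F ->
  exists p : (vec N.+1 -> R) * ('I_N.+1 -> vec N.+1 -> R) * ('I_N.+1 -> 'I_N.+1 -> vec N.+1 -> R)
             * ('I_N.+1 -> 'I_N.+1 -> 'I_N.+1 -> vec N.+1 -> R),
    (forall t z, 0 <= t <= T -> p.1.1.1 (vcons t z) = F t z) /\ Tay3 p.1.1.1 p.1.1.2 p.1.2 p.2.
Proof.
move=> [G [HG HGF]]; have [C0 [G1 [G2 [G3 H]]]] := smooth3 G HG.
by exists (G, G1, G2, G3); split.
Qed.

Lemma ML n T (x : R -> vec n -> vec n) (J : R -> vec n -> mat n)
  (phi : R -> vec n -> vec n -> R) (gy gz : R -> vec n -> vec n) LZ rho :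
  0 <= T -> 0 <= rho ->
  (forall i, smooth_strip T (fun t z => x t z i)) ->
  smooth_strip T (fun t (w : vec (n + n)) => phi t (vfst w) (vsnd w)) ->
  (forall t z (i j : 'I_n), 0 <= t <= T ->
     derivable_pt_lim (fun h => x t (vadd z (vscale h (basis j))) i) 0 (J t z i j)) ->
  (forall t z (j : 'I_n), 0 <= t <= T ->
     derivable_pt_lim (fun h => phi t (vscale h (basis j)) z) 0 (gy t z j)) ->
  (forall t z (j : 'I_n), 0 <= t <= T ->
     derivable_pt_lim (fun h => phi t vzero (vadd z (vscale h (basis j)))) 0 (gz t z j)) ->
  (forall t z (j : 'I_n), 0 <= t <= T ->
     \big[Rplus/0]_(i < n) (J t z i j * gy t z i) = gz t z j) ->
  exists R3 Cx (A : R -> vec n -> mat n), 0 <= R3 /\ 0 <= Cx /\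
    forall t z0 v, 0 <= t <= T -> nrm1 z0 <= LZ -> nrm1 v <= rho ->
      Rabs (phi t (vsub (x t z0) (x t (vadd z0 v))) (vadd z0 v)
              - (phi t vzero z0 + / 2 * qform (A t z0) v)) <= R3 * nrm1 v ^ 3 /\
      nrm1 (vsub (vsub (x t (vadd z0 v)) (x t z0)) (mulmv (J t z0) v)) <= Cx * nrm1 v ^ 2.
Proof.
move=> HT Hrho Hx Hphi HJ Hgy Hgz H6.
have [gxd Hgxd] := choice_fun _ (fun i => strip3 T _ (Hx i)).
pose gx i := (gxd i).1.1.1. pose gx1 i := (gxd i).1.1.2.
pose gx2 i := (gxd i).1.2. pose gx3 i := (gxd i).2.
have Egx : forall i t z, 0 <= t <= T -> gx i (vcons t z) = x t z i by move=> i; exact: (proj1 (Hgxd i)).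
have Tx : forall i, Tay3 (gx i) (gx1 i) (gx2 i) (gx3 i) by move=> i; exact: (proj2 (Hgxd i)).
have [[[[gp gp1] gp2] gp3] [Egp Tp]] := strip3 T _ Hphi.
rewrite /= in Egp Tp.
pose Lx := T + LZ + rho.
have [B0 [B00 HB0]] := fin_bound _ (fun i => gx i) Lx (fun i => proj1 (Tx i)).
have [B1 [B10 HB1]] := fin_bound _ (fun p : 'I_n * 'I_n.+1 => gx1 p.1 p.2) Lx
  (fun p => proj1 (proj2 (proj2 (Tx p.1))) p.2).
have [B2 [B20 HB2]] := fin_bound _ (fun p : 'I_n * 'I_n.+1 * 'I_n.+1 => gx2 p.1.1 p.1.2 p.2) Lx
  (fun p => proj1 (proj2 (proj2 (proj2 (proj2 (Tx p.1.1))))) p.1.2 p.2).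
have [B3 [B30 HB3]] := fin_bound _ (fun p : 'I_n * 'I_n.+1 * 'I_n.+1 * 'I_n.+1 => gx3 p.1.1.1 p.1.1.2 p.1.2 p.2) Lx
  (fun p => proj2 (proj2 (proj2 (proj2 (proj2 (proj2 (Tx p.1.1.1)))))) p.1.1.2 p.1.2 p.2).
pose LP := T + 2 * INR n * B0 + LZ + rho.
have [BD [BD0 HBD]] := fin_bound _ (fun k => gp1 k) LP (proj1 (proj2 (proj2 Tp))).
have [BH [BH0 HBH]] := fin_bound _ (fun p : 'I_(n+n).+1 * 'I_(n+n).+1 => gp2 p.1 p.2) LP
  (fun p => proj1 (proj2 (proj2 (proj2 (proj2 Tp)))) p.1 p.2).
have [BP3 [BP30 HBP3]] := fin_bound _ (fun p : 'I_(n+n).+1 * 'I_(n+n).+1 * 'I_(n+n).+1 => gp3 p.1.1 p.1.2 p.2) LP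
  (fun p => proj2 (proj2 (proj2 (proj2 (proj2 (proj2 Tp))))) p.1.1 p.1.2 p.2).
rewrite /= in HB1 HB2 HB3 HBH HBP3.
have hn := pos_INR n.
pose a1 := INR n * B1. pose a2 := INR n * B2. pose a3 := INR n * B3 / 2.
pose cD := a2 / 2 + a3 * rho. pose cy := a1 + cD * rho.
have a10 : 0 <= a1 by apply: Rmult_le_pos.
have a20 : 0 <= a2 by apply: Rmult_le_pos.
have a30 : 0 <= a3 by rewrite /a3; apply: Rmult_le_pos; [apply: Rmult_le_pos|lra].
have cD0 : 0 <= cD by rewrite /cD; have := Rmult_le_pos _ _ a30 Hrho; lra.
have cy0 : 0 <= cy by rewrite /cy; have := Rmult_le_pos _ _ cD0 Hrho; lra.
pose Mm (t : R) (z0 : vec n) (k : 'I_(n+n).+1) (j : 'I_n) := vcons 0 (vpack (fun i => - J t z0 i j) (basis j)) k.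
pose PP (t : R) (z0 : vec n) : vec (n+n).+1 := vcons t (vpack vzero z0).
pose A (t : R) (z0 : vec n) : mat n := fun j l =>
  \big[Rplus/0]_(k < (n+n).+1) \big[Rplus/0]_(k' < (n+n).+1) (Mm t z0 k j * gp2 k k' (PP t z0) * Mm t z0 k' l)
  - \big[Rplus/0]_(i < n) (gy t z0 i * gx2 i (lift ord0 j) (lift ord0 l) (vcons t z0)).
exists (BD * a3 + / 2 * (BH * cD * (cy + 1 + (a1 + 1))) + BP3 / 2 * (cy + 1) ^ 3), cD, A.
split.
  have h1 := Rmult_le_pos _ _ BD0 a30.
  have h2 : 0 <= BH * cD * (cy + 1 + (a1 + 1)) by apply: Rmult_le_pos; [apply: Rmult_le_pos|lra].
  have h3 : 0 <= BP3 / 2 * (cy + 1) ^ 3 by apply: Rmult_le_pos; [lra|apply: pow_le; lra].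
  lra.
split => //.
move=> t z0 v Ht Hz0 Hv.
set nu := nrm1 v in Hv *. have nu0 : 0 <= nu := nrm1_ge0 _ v.
pose P0 := vcons t z0.
have HP0 : nrm1 P0 <= Lx by rewrite /P0 nrm1_cons Rabs_right; rewrite /Lx; lra.
have EJ : forall i j, gx1 i (lift ord0 j) P0 = J t z0 i j.
  move=> i j; apply: (pd_unique _ _ _ _ _ (proj1 (proj2 (Tx i)) (lift ord0 j))).
  apply: deriv_ext (HJ t z0 i j Ht) => h; by rewrite /P0 -vec_cons_eq Egx.
have HJb : forall i j, Rabs (J t z0 i j) <= B1.
  by move=> i j; rewrite -EJ; exact: (HB1 (i, lift ord0 j) P0 HP0).
pose X i j k := gx2 i (lift ord0 j) (lift ord0 k) P0.
have HXb : forall i j k, Rabs (X i j k) <= B2 by move=> i j k; exact: (HB2 (i, lift ord0 j, lift ord0 k) P0 HP0).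
pose Lv := mulmv (J t z0) v. pose Q i := bil (X i) v v.
pose e2 i := x t (vadd z0 v) i - x t z0 i - Lv i - / 2 * Q i.
have He2 : forall i, Rabs (e2 i) <= B3 * nu ^ 3 / 2.
  move=> i.
  have [_ [P1 [C1 [P2 [C2 [P3 C3]]]]]] := Tx i.
  have T2 := taylor2 (gx i) (gx1 i) (gx2 i) (gx3 i) P0 (vcons 0 v) B3 P1 C1 P2 C2 P3 C3.
  rewrite /P0 V1 !Egx // lin_cons bil_cons0 nrm1_cons Rabs_R0 Rplus_0_l Rmult_0_r Rplus_0_l in T2.
  have EJi : (fun j => gx1 i (lift ord0 j) (vcons t z0)) = J t z0 i.
    by apply: functional_extensionality => j; exact: EJ.
  rewrite EJi in T2; apply: T2.
  move=> s Hs j k l; apply: (HB3 (i, j, k, l)).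
  rewrite V2 nrm1_cons Rabs_right; last lra.
  apply: Rle_trans (Rplus_le_compat_l _ _ _ (nrm1_add _ _ _)) _.
  rewrite nrm1_scale Rabs_right; last lra.
  have h : s * nu <= 1 * nu by apply: Rmult_le_compat_r; lra.
  rewrite -/nu /Lx; lra.
have hLv : nrm1 Lv <= a1 * nu.
  apply: Rle_trans (nrm1_bound _ Lv (B1 * nu) _) _; last by rewrite /a1; right; ring.
  move=> i; exact: lin_bound.
have hQ : nrm1 Q <= a2 * nu ^ 2.
  apply: Rle_trans (nrm1_bound _ Q (B2 * nu * nu) _) _; last by rewrite /a2; right; ring.
  move=> i; exact: bil_bound.
have he2 : nrm1 e2 <= a3 * nu ^ 3.
  apply: Rle_trans (nrm1_bound _ e2 (B3 * nu ^ 3 / 2) He2) _; rewrite /a3; right; field.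
have nu2 : nu ^ 3 <= rho * nu ^ 2.
  have h := Rmult_le_compat_r (nu ^ 2) _ _ (pow_le _ 2 nu0) Hv.
  have -> : nu ^ 3 = nu * nu ^ 2 by ring.
  exact: h.
have nu1 : nu ^ 2 <= rho * nu.
  have h := Rmult_le_compat_r nu _ _ nu0 Hv.
  have -> : nu ^ 2 = nu * nu by ring.
  exact: h.
have EQe : vsub (vsub (x t (vadd z0 v)) (x t z0)) Lv = vadd (vscale (/ 2) Q) e2.
  apply: functional_extensionality => i.
  change (x t (vadd z0 v) i - x t z0 i - Lv i = / 2 * Q i + e2 i); rewrite /e2; ring.
have hD : nrm1 (vadd (vscale (/ 2) Q) e2) <= cD * nu ^ 2.
  apply: Rle_trans (nrm1_add _ _ _) _; rewrite nrm1_scale Rabs_right; last lra.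
  have := Rmult_le_compat_l _ _ _ a30 nu2.
  rewrite /cD; lra.
split; last by rewrite EQe.
have Rm1 : Rabs (-1) = 1 by split_Rabs; lra.
pose y := vsub (x t z0) (x t (vadd z0 v)).
have Ey : y = vscale (-1) (vadd Lv (vadd (vscale (/ 2) Q) e2)).
  apply: functional_extensionality => i.
  change (x t z0 i - x t (vadd z0 v) i = -1 * (Lv i + (/ 2 * Q i + e2 i))); rewrite /e2; ring.
have hy : nrm1 y <= cy * nu.
  rewrite Ey nrm1_scale Rm1 Rmult_1_l; apply: Rle_trans (nrm1_add _ _ _) _.
  have := Rmult_le_compat_l _ _ _ cD0 nu1.
  have : cy * nu = a1 * nu + cD * (rho * nu) by rewrite /cy; ring.
  lra.
have hyB : nrm1 y <= 2 * INR n * B0.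
  apply: Rle_trans (nrm1_sub _ _ _) _.
  have h1 : nrm1 (x t z0) <= INR n * B0.
    apply: nrm1_bound => i; rewrite -Egx //; exact: HB0.
  have h2 : nrm1 (x t (vadd z0 v)) <= INR n * B0.
    apply: nrm1_bound => i; rewrite -Egx //; apply: HB0.
    rewrite nrm1_cons Rabs_right; last lra.
    have := nrm1_add _ z0 v; rewrite -/nu /Lx; lra.
  lra.
have nrm1_zero : nrm1 (@vzero n) = 0.
  by rewrite /nrm1 big1 // => i _; rewrite /vzero Rabs_R0.
pose PPt := PP t z0. pose W := vcons 0 (vpack y v).
have HB00 : 0 <= 2 * INR n * B0 by apply: Rmult_le_pos; [lra|].
have HPP : nrm1 PPt <= LP.
  rewrite /PPt /PP nrm1_cons nrm1_pack nrm1_zero Rabs_right; last lra.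
  rewrite /LP; lra.
have [_ [Q1 [D1c [Q2 [D2c [Q3 D3c]]]]]] := Tp.
have T2 := taylor2 gp gp1 gp2 gp3 PPt W BP3 Q1 D1c Q2 D2c Q3 D3c.
have EP1 : gp (vadd PPt W) = phi t y (vadd z0 v) by rewrite /PPt /PP /W V3 Egp // vfst_pack vsnd_pack.
have EP0 : gp PPt = phi t vzero z0 by rewrite /PPt /PP Egp // vfst_pack vsnd_pack.
rewrite EP1 EP0 in T2.
have Hseg : forall s, 0 <= s <= 1 -> nrm1 (vadd PPt (vscale s W)) <= LP.
  move=> s Hs.
  rewrite /PPt /PP /W V4 nrm1_cons nrm1_pack nrm1_scale Rabs_right; last lra.
  rewrite Rabs_right; last lra.
  have := nrm1_add _ z0 (vscale s v); rewrite nrm1_scale Rabs_right; last lra.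
  have hs1 : s * nrm1 y <= 1 * nrm1 y by apply: Rmult_le_compat_r; [exact: nrm1_ge0|lra].
  have hs2 : s * nu <= 1 * nu by apply: Rmult_le_compat_r; lra.
  rewrite -/nu /LP; lra.
have {}T2 := T2 (fun s Hs j k l => HBP3 (j, k, l) _ (Hseg s Hs)).
have Egy : forall i, gp1 (lift ord0 (lshift n i)) PPt = gy t z0 i.
  move=> i; apply: (pd_unique _ _ _ _ _ (Q1 _)).
  apply: deriv_ext (Hgy t z0 i Ht) => h; by rewrite /PPt /PP -V5 Egp // vfst_pack vsnd_pack.
have Egz : forall i, gp1 (lift ord0 (rshift n i)) PPt = gz t z0 i.
  move=> i; apply: (pd_unique _ _ _ _ _ (Q1 _)).
  apply: deriv_ext (Hgz t z0 i Ht) => h; by rewrite /PPt /PP -V6 Egp // vfst_pack vsnd_pack.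
have EL : lin (fun k => gp1 k PPt) W = lin (gy t z0) y + lin (gz t z0) v.
  rewrite /W lin_cons lin_pack Rmult_0_r Rplus_0_l.
  have -> : (fun i : 'I_n => gp1 (lift ord0 (lshift n i)) PPt) = gy t z0
    by apply: functional_extensionality => i; exact: Egy.
  have -> : (fun i : 'I_n => gp1 (lift ord0 (rshift n i)) PPt) = gz t z0
    by apply: functional_extensionality => i; exact: Egz.
  done.
have E6 : lin (gz t z0) v = lin (gy t z0) Lv := P6lin _ (J t z0) _ _ v (fun j => H6 t z0 j Ht).
have Elin : lin (gy t z0) y = - lin (gy t z0) Lv - / 2 * lin (gy t z0) Q - lin (gy t z0) e2.
  rewrite Ey lin_scale !lin_add lin_scale; ring.
pose W' := vcons 0 (vpack (vscale (-1) Lv) v).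
have EWW : vsub W W' = vcons 0 (vpack (vscale (-1) (vadd (vscale (/ 2) Q) e2)) vzero).
  rewrite /W /W'; apply: functional_extensionality => k.
  elim/cons_ind: k => [|k]; rewrite /vsub ?vcons_0 ?vcons_l; first ring.
  elim/pack_ind: k => k; rewrite ?vpack_l ?vpack_r /vzero /vscale /vadd; last ring.
  change (x t z0 k - x t (vadd z0 v) k - -1 * Lv k = -1 * (/ 2 * Q k + e2 k)).
  rewrite /e2; ring.
have hWW : nrm1 (vsub W W') <= cD * nu ^ 2.
  rewrite EWW nrm1_cons nrm1_pack nrm1_scale nrm1_zero Rm1 Rabs_R0; lra.
have hW : nrm1 W <= (cy + 1) * nu.
  rewrite /W nrm1_cons nrm1_pack Rabs_R0 -/nu; lra.
have hW' : nrm1 W' <= (a1 + 1) * nu.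
  rewrite /W' nrm1_cons nrm1_pack nrm1_scale Rm1 Rabs_R0 -/nu; lra.
have Hbil := bil_diff _ (fun k l => gp2 k l PPt) W W' BH (fun k l => HBH (k, l) _ HPP).
have EQF : bil (fun k l => gp2 k l PPt) W' W'
  = bil (fun j l => \big[Rplus/0]_(k < (n+n).+1) \big[Rplus/0]_(k' < (n+n).+1)
           (Mm t z0 k j * gp2 k k' PPt * Mm t z0 k' l)) v v.
  apply: QF => k; rewrite /W' /Mm.
  elim/cons_ind: k => [|k]; rewrite ?vcons_0 ?vcons_l.
    by rewrite big1 // => j _; rewrite vcons_0; ring.
  elim/pack_ind: k => k; rewrite ?vpack_l ?vpack_r.
    rewrite /vscale /Lv /mulmv -sum_scal; apply: eq_bigr => j _; rewrite vcons_l vpack_l; ring.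
  rewrite -{1}(sum_basis _ v k); apply: eq_bigr => j _; by rewrite vcons_l vpack_r.
have EQX : lin (gy t z0) Q = bil (fun j k => \big[Rplus/0]_(i < n) (gy t z0 i * X i j k)) v v
  by rewrite bil_summ.
have EA : qform (A t z0) v = bil (fun j l => \big[Rplus/0]_(k < (n+n).+1) \big[Rplus/0]_(k' < (n+n).+1)
           (Mm t z0 k j * gp2 k k' PPt * Mm t z0 k' l)) v v
         - bil (fun j k => \big[Rplus/0]_(i < n) (gy t z0 i * X i j k)) v v.
  rewrite qform_bil /A; exact: bil_subm.
rewrite -/y.
set bWW := bil _ W W in T2 Hbil.
set tay := phi t y (vadd z0 v) - phi t vzero z0 - _ - _ in T2.
set bW' := bil _ W' W' in Hbil EQF.
have Key : phi t y (vadd z0 v) - (phi t vzero z0 + / 2 * qform (A t z0) v)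
           = tay - lin (gy t z0) e2 + / 2 * (bWW - bW').
  rewrite EA -EQF -EQX /tay EL E6 Elin; ring.
rewrite Key.
have f1 : BP3 * nrm1 W ^ 3 / 2 <= BP3 / 2 * (cy + 1) ^ 3 * nu ^ 3.
  have h : nrm1 W ^ 3 <= ((cy + 1) * nu) ^ 3 by apply: pow_incr; split; [exact: nrm1_ge0|exact: hW].
  have h2 := Rmult_le_compat_l (BP3 / 2) _ _ (ltac:(lra)) h.
  rewrite Rpow_mult_distr in h2. lra.
have f2 : Rabs (lin (gy t z0) e2) <= BD * (a3 * nu ^ 3).
  apply: Rle_trans (lin_bound _ _ _ BD _) _.
    by move=> i; rewrite -Egy; exact: (HBD (lift ord0 (lshift n i)) _ HPP).
  exact: Rmult_le_compat_l.
have f3 : Rabs (bWW - bW') <= BH * cD * (cy + 1 + (a1 + 1)) * nu ^ 3.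
  apply: Rle_trans Hbil _.
  have h : nrm1 (vsub W W') * (nrm1 W + nrm1 W') <= (cD * nu ^ 2) * ((cy + 1) * nu + (a1 + 1) * nu).
    apply: Rmult_le_compat; [exact: nrm1_ge0| |exact: hWW|].
      have := nrm1_ge0 _ W; have := nrm1_ge0 _ W'; lra.
    lra.
  have h2 := Rmult_le_compat_l BH _ _ BH0 h.
  have -> : BH * cD * (cy + 1 + (a1 + 1)) * nu ^ 3 = BH * (cD * nu ^ 2 * ((cy + 1) * nu + (a1 + 1) * nu)) by ring.
  rewrite -Rmult_assoc in h2; exact: h2.
have tri := Rabs_triang (tay - lin (gy t z0) e2) (/ 2 * (bWW - bW')).
have tri2 := Rabs_triang tay (- lin (gy t z0) e2).
rewrite Rabs_Ropp in tri2. rewrite Rabs_mult (Rabs_right (/ 2)) in tri; last lra.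
have -> : (BD * a3 + / 2 * (BH * cD * (cy + 1 + (a1 + 1))) + BP3 / 2 * (cy + 1) ^ 3) * nu ^ 3
  = BD * (a3 * nu ^ 3) + / 2 * (BH * cD * (cy + 1 + (a1 + 1)) * nu ^ 3) + BP3 / 2 * (cy + 1) ^ 3 * nu ^ 3 by ring.
have : tay - lin (gy t z0) e2 = tay + - lin (gy t z0) e2 by ring.
move=> E; rewrite E in tri *.
lra.
Qed.

Lemma lim_le (X Y K s0 : R) : 0 < s0 ->
  (forall s, 0 < s <= s0 -> Y - s * K <= X) -> Y <= X.
Proof.
move=> hs0 H; apply: Rnot_lt_le => hlt.
pose s := Rmin s0 ((Y - X) / (2 * (Rabs K + 1))).
have hK : 0 < 2 * (Rabs K + 1) by have := Rabs_pos K; lra.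
have hq : 0 < (Y - X) / (2 * (Rabs K + 1)) by apply: Rdiv_lt_0_compat; lra.
have hs : 0 < s <= s0 by rewrite /s; split; [apply: Rmin_pos|apply: Rmin_l].
have hsq : s <= (Y - X) / (2 * (Rabs K + 1)) by exact: Rmin_r.
have := H s hs.
have : s * K <= s * (Rabs K + 1) by apply: Rmult_le_compat_l; [lra|have := Rle_abs K; lra].
have : s * (Rabs K + 1) <= (Y - X) / 2.
  have h := Rmult_le_compat_r (Rabs K + 1) _ _ (ltac:(have := Rabs_pos K; lra)) hsq.
  apply: Rle_trans h _; right; field; have := Rabs_pos K; lra.
lra.
Qed.

Lemma dot_lower n (p e : vec n) :
  dot p p - 2 * (nrm1 p * nrm1 e) <= dot (vadd p e) (vadd p e).
Proof.
have E : dot (vadd p e) (vadd p e) = dot p p + 2 * lin p e + dot e e.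
  rewrite /dot /lin -sum_scal -!big_split; apply: eq_bigr => i _ /=; rewrite /vadd; ring.
have h1 : Rabs (lin p e) <= nrm1 p * nrm1 e.
  rewrite lin_comm Rmult_comm; apply: lin_bound => i; exact: coord_le_nrm1.
have := dot_ge0 _ e. rewrite E. split_Rabs; lra.
Qed.

Lemma dot_scale n s (v : vec n) : dot (vscale s v) (vscale s v) = s ^ 2 * dot v v.
Proof. rewrite /dot -sum_scal; apply: eq_bigr => i _; rewrite /vscale; ring. Qed.

Lemma dot_vnorm n (v : vec n) : dot v v = vnorm v ^ 2.
Proof. rewrite /vnorm /= Rmult_1_r sqrt_sqrt //; exact: dot_ge0. Qed.

Lemma qform_scale n (M : mat n) s v : qform M (vscale s v) = s ^ 2 * qform M v.
Proof.
rewrite !qform_bil !bil_lin lin_scale.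
rewrite (_ : (fun j => lin (M j) (vscale s v)) = (fun j => s * lin (M j) v)); last first.
  by apply: functional_extensionality => j; rewrite lin_scale.
rewrite lin_scall; ring.
Qed.

Lemma mulmv_scale n (M : mat n) s v : mulmv M (vscale s v) = vscale s (mulmv M v).
Proof. apply: functional_extensionality => i; exact: (lin_scale _ (M i) v s). Qed.

Lemma bil_transp n (M : mat n) v : bil (fun j k => M k j) v v = bil M v v.
Proof.
rewrite /bil.
rewrite (eq_bigr (fun j => \big[Rplus/0]_(k < n) (M k j * v k * v j))); last first.
  by move=> j _; rewrite big_distrl.
rewrite (exchange_big_dep xpredT) //=; apply: eq_bigr => k _.
rewrite big_distrl /=; apply: eq_bigr => j _; ring.
Qed.

Lemma qform_sym n (M : mat n) v : qform (fun j k => (M j k + M k j) / 2) v = qform M v.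
Proof.
rewrite !qform_bil.
have E : bil (fun j k => (M j k + M k j) / 2) v v = / 2 * (bil M v v + bil (fun j k => M k j) v v).
  rewrite /bil -big_split big_distrr /=; apply: eq_bigr => j _ /=.
  rewrite -Rmult_plus_distr_r -big_split /= -Rmult_assoc; congr (_ * _).
  rewrite big_distrr /=; apply: eq_bigr => k _ /=; field.
rewrite E bil_transp; field.
Qed.

Lemma cabs_le a b : cabs a b <= Rabs a + Rabs b.
Proof.
rewrite /cabs; rewrite -(sqrt_square (Rabs a + Rabs b)); last by have := Rabs_pos a; have := Rabs_pos b; lra.
apply: sqrt_le_1_alt.
have := Rabs_pos a; have := Rabs_pos b.
have -> : a ^ 2 = Rabs a * Rabs a by rewrite -Rabs_mult Rabs_right /=; nra.
have -> : b ^ 2 = Rabs b * Rabs b by rewrite -Rabs_mult Rabs_right /=; nra.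
nra.
Qed.

Theorem lemma6p10 (n : nat) (T d : R) (K0 : vec n -> Prop) (eta : option R)
  (x : R -> vec n -> vec n) (PhiRe PhiIm : R -> vec n -> vec n -> R)
  (J : R -> vec n -> mat n)
  (gyRe gyIm : R -> vec n -> vec n) (gzRe gzIm : R -> vec n -> vec n)
  (C w4 delta r Rm1 : R) :
  (1 <= n)%nat -> 0 < T -> seq_compact K0 -> 0 < d ->
  (forall e, eta = Some e -> 0 < e) ->
  (* (P1) *)
  (forall i : 'I_n, smooth_strip T (fun t z => x t z i)) ->
  (* (P2) : Phi = PhiRe + i PhiIm *)
  smooth_strip T (fun t (w : vec (n + n)) => PhiRe t (vfst w) (vsnd w)) ->
  smooth_strip T (fun t (w : vec (n + n)) => PhiIm t (vfst w) (vsnd w)) ->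
  (* J t z = D_z x(t,z) *)
  (forall t z (i j : 'I_n), 0 <= t <= T ->
     derivable_pt_lim (fun h => x t (vadd z (vscale h (basis j))) i) 0 (J t z i j)) ->
  (* gyRe + i gyIm = nabla_y Phi(t,0,z) *)
  (forall t z (j : 'I_n), 0 <= t <= T ->
     derivable_pt_lim (fun h => PhiRe t (vscale h (basis j)) z) 0 (gyRe t z j) /\
     derivable_pt_lim (fun h => PhiIm t (vscale h (basis j)) z) 0 (gyIm t z j)) ->
  (* gzRe + i gzIm = nabla_z [Phi(t,0,z)] *)
  (forall t z (j : 'I_n), 0 <= t <= T ->
     derivable_pt_lim (fun h => PhiRe t vzero (vadd z (vscale h (basis j)))) 0 (gzRe t z j) /\
     derivable_pt_lim (fun h => PhiIm t vzero (vadd z (vscale h (basis j)))) 0 (gzIm t z j)) ->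
  (* (P3) *)
  0 < C ->
  (forall t z, 0 <= t <= T -> inK K0 d z -> forall j, gyIm t z j = 0) ->
  (forall t z z', 0 <= t <= T -> inK K0 d z -> inK K0 d z' ->
     cvnorm (vsub (gyRe t z) (gyRe t z')) (vsub (gyIm t z) (gyIm t z'))
       + vnorm (vsub (x t z) (x t z')) >= C * vnorm (vsub z z')) ->
  (* (P4) *)
  0 < w4 ->
  (forall t y z, 0 <= t <= T -> inK K0 d z -> within_eta eta y ->
     PhiIm t y z >= w4 * (vnorm y) ^ 2) ->
  (* (P6) *)
  (forall t z, 0 <= t <= T ->
     PhiIm t vzero z = 0 /\ (forall j, gyIm t z j = 0) /\
     (forall j : 'I_n,
        \big[Rplus/0]_(i < n) (J t z i j * gyRe t z i) = gzRe t z j /\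
        0 = gzIm t z j)) ->
  0 < delta ->
  0 < r -> r <= d / 2 ->
  (forall t z0, in_Kbar T K0 d x J delta t z0 ->
     (forall z, vnorm (vsub z z0) <= r -> inK K0 d z) /\
     (forall z, vnorm (vsub z z0) < r -> inv_norm_le (J t z) Rm1)) ->
  exists (R3 wa : R) (ARe AIm : R -> vec n -> mat n),
    0 < wa /\
    forall t z0, in_Kbar T K0 d x J delta t z0 ->
      mat_symmetric (AIm t z0) /\
      (forall v, qform (AIm t z0) v >= wa * (vnorm v) ^ 2) /\
      (forall z, vnorm (vsub z z0) < r / 2 ->
         let y0 := x t z0 in
         cabs (PhiRe t (vsub y0 (x t z)) z
                 - (PhiRe t vzero z0 + / 2 * qform (ARe t z0) (vsub z z0)))
              (PhiIm t (vsub y0 (x t z)) z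
                 - (PhiIm t vzero z0 + / 2 * qform (AIm t z0) (vsub z z0)))
         <= R3 * (vnorm (vsub z z0)) ^ 3).
Proof.
move=> Hn HT HK0 Hd Heta Hx HRe HIm HJ Hgy Hgz HC HgyIm0 HP3 Hw4 HP4 HP6 Hdel Hr Hr2 Hball.
have [LK HLK] := seq_compact_bounded _ K0 HK0.
have hn := pos_INR n.
have hn1 : 1 <= INR n by apply: (le_INR 1); apply/leP.
pose LZ := LK + INR n * (d + 1).
have HLZ : forall z, inK K0 (d / 2) z -> nrm1 z <= LZ.
  move=> z Hz; have [k [Hk Hzk]] := Hz 1 Rlt_0_1.
  have h1 := nrm1_le_vnorm _ (vsub z k).
  have h2 := nrm1_add _ (vsub z k) k; rewrite vadd_sub in h2.
  have h3 := HLK k Hk.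
  have : INR n * vnorm (vsub z k) <= INR n * (d + 1) by apply: Rmult_le_compat_l; lra.
  rewrite /LZ; lra.
pose rho := INR n * (r / 2).
have Hrho : 0 < rho by apply: Rmult_lt_0_compat; lra.
have [R3r [Cxr [Ar [R3r0 [Cxr0 HMLr]]]]] := ML n T x J PhiRe gyRe gzRe LZ rho (Rlt_le _ _ HT) (Rlt_le _ _ Hrho)
  Hx HRe HJ (fun t z j Ht => proj1 (Hgy t z j Ht)) (fun t z j Ht => proj1 (Hgz t z j Ht))
  (fun t z j Ht => proj1 (proj2 (proj2 (HP6 t z Ht)) j)).
have H6i : forall t z (j : 'I_n), 0 <= t <= T ->
     \big[Rplus/0]_(i < n) (J t z i j * gyIm t z i) = gzIm t z j.
  move=> t z j Ht; have [_ [H1 H2]] := HP6 t z Ht.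
  rewrite -(proj2 (H2 j)) big1 // => i _; rewrite H1; ring.
have [R3i [Cxi [Ai [R3i0 [Cxi0 HMLi]]]]] := ML n T x J PhiIm gyIm gzIm LZ rho (Rlt_le _ _ HT) (Rlt_le _ _ Hrho)
  Hx HIm HJ (fun t z j Ht => proj2 (Hgy t z j Ht)) (fun t z j Ht => proj2 (Hgz t z j Ht)) H6i.
exists ((R3r + R3i) * INR n ^ 3), (2 * w4 / (Rm1 ^ 2 + 1)), Ar,
  (fun t z0 j k => (Ai t z0 j k + Ai t z0 k j) / 2).
split.
  apply: Rdiv_lt_0_compat; first lra.
  have := pow2_ge_0 Rm1; lra.
move=> t z0 HKb.
have [[Ht Hz0d2] _] := HKb.
have Hz0 := HLZ z0 Hz0d2.
have [Hballin Hinv] := Hball t z0 HKb.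
split; first by move=> j k; rewrite Rplus_comm.
split.
  move=> v; apply: Rle_ge; rewrite qform_sym.
  set q := qform (Ai t z0) v.
  have H00 : vnorm (vsub z0 z0) < r.
    have -> : vsub z0 z0 = (fun _ => 0) by vext; ring.
    rewrite /vnorm /dot big1 ?sqrt_0 // => i _; ring.
  have [Minv [HL [_ Hb]]] := Hinv z0 H00.
  set Jv := mulmv (J t z0) v.
  set a := vnorm Jv.
  have Hvle : vnorm v <= Rm1 * a.
    have := Hb Jv; by rewrite /Jv -mulmv_mmul HL mulmv_id.
  have ha0 : 0 <= a := vnorm_ge0 _ _.
  suff Hclaim : w4 * a ^ 2 <= / 2 * q.
    have hv0 := vnorm_ge0 _ v.
    have h1 : vnorm v ^ 2 <= (Rm1 ^ 2 + 1) * a ^ 2.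
      have : vnorm v ^ 2 <= (Rm1 * a) ^ 2 by apply: pow_incr; lra.
      rewrite Rpow_mult_distr; have := pow2_ge_0 a; nra.
    have hR : 0 < Rm1 ^ 2 + 1 by have := pow2_ge_0 Rm1; lra.
    have -> : 2 * w4 / (Rm1 ^ 2 + 1) * vnorm v ^ 2 = 2 * w4 * (vnorm v ^ 2 / (Rm1 ^ 2 + 1)) by field; lra.
    have : vnorm v ^ 2 / (Rm1 ^ 2 + 1) <= a ^ 2.
      apply: (Rmult_le_reg_r (Rm1 ^ 2 + 1)) => //.
      have -> : vnorm v ^ 2 / (Rm1 ^ 2 + 1) * (Rm1 ^ 2 + 1) = vnorm v ^ 2 by field; lra.
      lra.
    move=> h2; have := Rmult_le_compat_l (2 * w4) _ _ (ltac:(lra)) h2; lra.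
  pose N1 := nrm1 v. pose NJ := nrm1 Jv.
  have HN1 : 0 <= N1 := nrm1_ge0 _ v. have HNJ : 0 <= NJ := nrm1_ge0 _ Jv.
  have HCN : 0 <= Cxi * N1 ^ 2 by apply: Rmult_le_pos => //; exact: pow2_ge_0.
  pose E := if eta is Some e then 2 * e else 1.
  have HE : 0 < E by rewrite /E; case: (eta) Heta => [e|] H; [have := H e erefl; lra | lra].
  pose s0 := Rmin 1 (Rmin (rho / (N1 + 1)) (Rmin (r / (N1 + 1)) (E / (NJ + Cxi * N1 ^ 2 + 1)))).
  have Hs0 : 0 < s0.
    apply: Rmin_pos; first lra.
    apply: Rmin_pos; first by apply: Rdiv_lt_0_compat; lra.
    apply: Rmin_pos; apply: Rdiv_lt_0_compat; lra.
  apply: (lim_le (/ 2 * q) (w4 * a ^ 2) (2 * w4 * (Cxi * N1 ^ 2) * NJ + R3i * N1 ^ 3) s0 Hs0).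
  move=> s [hs hss].
  have hs1 : s <= 1 by apply: Rle_trans hss (Rmin_l _ _).
  have hs2 : s <= rho / (N1 + 1) by apply: Rle_trans hss _; apply: Rle_trans (Rmin_r _ _) (Rmin_l _ _).
  have hs3 : s <= r / (N1 + 1).
    apply: Rle_trans hss _; apply: Rle_trans (Rmin_r _ _) _; apply: Rle_trans (Rmin_r _ _) (Rmin_l _ _).
  have hs4 : s <= E / (NJ + Cxi * N1 ^ 2 + 1).
    apply: Rle_trans hss _; apply: Rle_trans (Rmin_r _ _) _; apply: Rle_trans (Rmin_r _ _) (Rmin_r _ _).
  have ldiv : forall c m, 0 <= m -> s <= c / (m + 1) -> s * (m + 1) <= c.
    move=> c m hm h; have := Rmult_le_compat_r (m + 1) _ _ (ltac:(lra)) h.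
    have -> : c / (m + 1) * (m + 1) = c by field; lra.
    done.
  have hs2' := ldiv _ _ HN1 hs2. have hs3' := ldiv _ _ HN1 hs3.
  have hs4' := ldiv _ (NJ + Cxi * N1 ^ 2) (ltac:(lra)) hs4.
  pose u := vscale s v.
  have Hu1 : nrm1 u = s * N1 by rewrite nrm1_scale Rabs_right //; lra.
  have Hu : nrm1 u <= rho by rewrite Hu1; nra.
  have [Hg Hxu] := HMLi t z0 u Ht Hz0 Hu.
  rewrite (proj1 (HP6 t z0 Ht)) qform_scale -/q Hu1 in Hg.
  rewrite Hu1 mulmv_scale -/Jv in Hxu.
  set y := vsub (x t z0) (x t (vadd z0 u)) in Hg.
  set e := vsub (vsub (x t (vadd z0 u)) (x t z0)) (vscale s Jv) in Hxu.
  have Ey : y = vscale (-1) (vadd (vscale s Jv) e).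
    by rewrite /y /e; apply: functional_extensionality => i; rewrite /vscale /vadd /vsub; ring.
  have Rm1' : Rabs (-1) = 1 by split_Rabs; lra.
  have Hin : inK K0 d (vadd z0 u).
    apply: Hballin; have -> : vsub (vadd z0 u) z0 = u by vext; ring.
    apply: Rle_trans (vnorm_le_nrm1 _ _) _; rewrite Hu1; nra.
  have HsJ : nrm1 (vscale s Jv) = s * NJ by rewrite nrm1_scale Rabs_right //; lra.
  have Hny : nrm1 y <= s * NJ + Cxi * (s * N1) ^ 2.
    rewrite Ey nrm1_scale Rm1' Rmult_1_l; apply: Rle_trans (nrm1_add _ _ _) _; lra.
  have HyE : vnorm y <= E.
    apply: Rle_trans (vnorm_le_nrm1 _ _) _; apply: Rle_trans Hny _.
    have : Cxi * (s * N1) ^ 2 <= s * (Cxi * N1 ^ 2).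
      have -> : Cxi * (s * N1) ^ 2 = s * (Cxi * N1 ^ 2) * s by ring.
      have := Rmult_le_compat_l _ _ _ (Rmult_le_pos _ _ (Rlt_le _ _ hs) HCN) hs1; lra.
    nra.
  have Hwe : within_eta eta y.
    rewrite /within_eta; move: HyE; rewrite /E; by case: (eta).
  have HP := Rge_le _ _ (HP4 t y (vadd z0 u) Ht Hin Hwe).
  have Hlow : s ^ 2 * a ^ 2 - 2 * (s * NJ * (Cxi * (s * N1) ^ 2)) <= vnorm y ^ 2.
    rewrite -dot_vnorm Ey dot_scale.
    have -> : (-1) ^ 2 = 1 by ring.
    rewrite Rmult_1_l; apply: Rle_trans (dot_lower _ _ _); rewrite dot_scale dot_vnorm -/a HsJ.
    have : s * NJ * nrm1 e <= s * NJ * (Cxi * (s * N1) ^ 2).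
      apply: Rmult_le_compat_l => //; nra.
    lra.
  have Hup : PhiIm t y (vadd z0 u) <= / 2 * (s ^ 2 * q) + R3i * (s * N1) ^ 3.
    move: Hg; rewrite Rplus_0_l; split_Rabs; lra.
  have hs2p : 0 < s ^ 2 by apply: pow_lt.
  apply: (Rmult_le_reg_l (s ^ 2)) => //.
  have -> : s ^ 2 * (w4 * a ^ 2 - s * (2 * w4 * (Cxi * N1 ^ 2) * NJ + R3i * N1 ^ 3))
    = w4 * (s ^ 2 * a ^ 2 - 2 * (s * NJ * (Cxi * (s * N1) ^ 2))) - R3i * (s * N1) ^ 3 by ring.
  have := Rmult_le_compat_l _ _ _ (Rlt_le _ _ Hw4) Hlow.
  have -> : s ^ 2 * (/ 2 * q) = / 2 * (s ^ 2 * q) by ring.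
  lra.
move=> z Hz /=.
pose v := vsub z z0.
have Ez : vadd z0 v = z by rewrite /v; vext; ring.
have Hv : nrm1 v <= rho.
  apply: Rle_trans (nrm1_le_vnorm _ v) _; apply: Rmult_le_compat_l => //; rewrite /v; lra.
have [Hre _] := HMLr t z0 v Ht Hz0 Hv.
have [Him _] := HMLi t z0 v Ht Hz0 Hv.
rewrite Ez in Hre Him.
rewrite qform_sym -/v.
apply: Rle_trans (cabs_le _ _) _.
have hp : nrm1 v ^ 3 <= INR n ^ 3 * vnorm v ^ 3.
  rewrite -Rpow_mult_distr; apply: pow_incr; split; [exact: nrm1_ge0|exact: nrm1_le_vnorm].
have := Rmult_le_compat_l _ _ _ R3r0 hp.
have := Rmult_le_compat_l _ _ _ R3i0 hp.
have -> : (R3r + R3i) * INR n ^ 3 * vnorm v ^ 3 = R3r * (INR n ^ 3 * vnorm v ^ 3) + R3i * (INR n ^ 3 * vnorm v ^ 3) by ring.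
lra.
Qed.
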